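(* There exists an upwards-oriented translating soliton in $\mathbb{H}^2\times\mathbb{R}$ which is rotationally symmetric about a vertical axis and is an entire vertical graph over $\mathbb{H}^2$.
   Context: $\mathbb{H}^2\times\mathbb{R}$ carries the product metric $\langle\cdot,\cdot\rangle$ of the hyperbolic plane of curvature $-1$ and the real line; $\partial_z$ is the unit vertical vector field. An oriented immersed surface $M$ with unit normal $\eta$ and mean curvature $H_M$ (half the trace of the second fundamental form with respect to $\eta$) is a translating soliton if $H_M=\langle\eta,\partial_z\rangle$ at every point. Upwards-oriented means $\langle\eta,\partial_z\rangle>0$ on the graph. A vertical axis is a line $\{o\}\times\mathbb{R}$, $o\in\mathbb{H}^2$, and rotations about it are the isometries $(x,z)\mapsto(\rho(x),z)$ with $\rho$ a hyperbolic rotation fixing $o$. *)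

(* Defs.v *)
From Stdlib Require Import Reals List.
From Coquelicot Require Import Coquelicot.
Open Scope R_scope.

(* Model of H^2: the upper half-plane {(x,y) : y > 0} with metric
   (dx^2 + dy^2)/y^2 (curvature -1).  A point of H^2 x R is (x,y,z). *)
Definition in_H2 (x y : R) : Prop := 0 < y.

Definition partial_x (f : R -> R -> R) (x y : R) : R := Derive (fun t => f t y) x.
Definition partial_y (f : R -> R -> R) (x y : R) : R := Derive (fun t => f x t) y.

Fixpoint iter_partial (w : list bool) (f : R -> R -> R) : R -> R -> R :=
  match w with
  | nil => f
  | b :: w' => let g := iter_partial w' f in
               if b then partial_y g else partial_x g
  end.

Definition smooth_on_H2 (u : R -> R -> R) : Prop :=
  forall (w : list bool) (x y : R), in_H2 x y ->
    ex_derive (fun t => iter_partial w u t y) x /\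
    ex_derive (fun t => iter_partial w u x t) y /\
    continuous (fun p : R * R => iter_partial w u (fst p) (snd p)) (x, y).

(* For the entire graph  M = {(p, u p) : p in H^2}  with upward unit normal
   eta = (- grad u + d_z)/W, where grad u = y^2 (u_x, u_y) is the hyperbolic
   gradient and W = sqrt(1 + |grad u|^2) = sqrt(1 + y^2 (u_x^2 + u_y^2)). *)
Definition Wg (u : R -> R -> R) (x y : R) : R :=
  sqrt (1 + y ^ 2 * ((partial_x u x y) ^ 2 + (partial_y u x y) ^ 2)).

(* <eta, d_z> for the upward unit normal of the graph of u. *)
Definition graph_angle (u : R -> R -> R) (x y : R) : R := / Wg u x y.

(* Mean curvature (half the trace of the second fundamental form w.r.t. the
   upward normal) of the graph of u:  H = (1/2) div_{H^2} (grad u / W).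
   In half-plane coordinates, with sqrt(det g) = 1/y^2,
   div_{H^2}(grad u / W) = y^2 ( d_x (u_x / W) + d_y (u_y / W) ). *)
Definition graph_mean_curvature (u : R -> R -> R) (x y : R) : R :=
  / 2 * (y ^ 2 * (partial_x (fun a b => partial_x u a b / Wg u a b) x y
                 + partial_y (fun a b => partial_y u a b / Wg u a b) x y)).

Definition graph_is_translator (u : R -> R -> R) : Prop :=
  forall x y, in_H2 x y -> graph_mean_curvature u x y = graph_angle u x y.

Definition graph_upwards (u : R -> R -> R) : Prop :=
  forall x y, in_H2 x y -> 0 < graph_angle u x y.

(* Orientation-preserving isometries of the half-plane: the Mobius maps
   z |-> (a z + b)/(c z + d), a,b,c,d real, ad - bc = 1, written out in
   coordinates z = x + i y. *)
Definition mobius_x (a b c d x y : R) : R :=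
  ((a * x + b) * (c * x + d) + a * c * y ^ 2) / ((c * x + d) ^ 2 + (c * y) ^ 2).
Definition mobius_y (a b c d x y : R) : R :=
  y / ((c * x + d) ^ 2 + (c * y) ^ 2).

Definition is_rotation_about (ox oy a b c d : R) : Prop :=
  a * d - b * c = 1 /\ mobius_x a b c d ox oy = ox /\ mobius_y a b c d ox oy = oy.

Definition rotationally_symmetric_about (u : R -> R -> R) (ox oy : R) : Prop :=
  forall a b c d, is_rotation_about ox oy a b c d ->
    forall x y, in_H2 x y -> u (mobius_x a b c d x y) (mobius_y a b c d x y) = u x y.

(* Main.v *)
Require Import Defs.
From Stdlib Require Import Reals Lra Lia Psatz.
From Coquelicot Require Import Coquelicot.
Open Scope R_scope.

Ltac nz1 := match goal with
  | |- _ <> _ => first [ apply Rgt_not_eq; solve [lra|nra] | apply Rlt_not_eq; solve [lra|nra]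
                       | apply pow_nonzero; solve [apply Rgt_not_eq; solve [lra|nra] | apply Rlt_not_eq; solve [lra|nra]] ]
  | _ => solve [lra|nra]
  end.
Ltac nz := repeat split; nz1.
Ltac fld := field; nz.

Definition sh1 (s : nat -> R) (n : nat) : R := match n with O => 0 | S m => s m end.
Definition sh2 (s : nat -> R) (n : nat) : R := match n with S (S m) => s m | _ => 0 end.
Definition sh3 (s : nat -> R) (n : nat) : R := match n with S (S (S m)) => s m | _ => 0 end.
Definition conv (a b : nat -> R) (n : nat) : R := sum_f_R0 (fun k => a k * b (n - k)%nat) n.

Definition step (b : nat -> R) (n : nat) : R :=
  ((if Nat.eqb n 0 then 2 else 0) - INR (S n) * sh1 b n
    + 2 * sh2 (conv b b) n + 4 * sh1 (conv b b) n
    - sh3 (conv b (conv b b)) n - 3 * sh2 (conv b (conv b b)) n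
    - 2 * sh1 (conv b (conv b b)) n) / (2 * INR n + 2).

Fixpoint pre (m : nat) : nat -> R :=
  match m with
  | O => fun _ => 0
  | S k => fun i => if Nat.eqb i k then step (pre k) k else pre k i
  end.

Definition acoef (n : nat) : R := pre (S n) n.

Lemma pre_ok : forall m i, (i < m)%nat -> pre m i = acoef i.
Proof.
  induction m; intros i Hi; [lia|].
  simpl. destruct (Nat.eqb i m) eqn:E.
  - apply Nat.eqb_eq in E; subst. unfold acoef. simpl. rewrite Nat.eqb_refl. reflexivity.
  - apply Nat.eqb_neq in E. apply IHm. lia.
Qed.

Lemma conv_ext : forall a b a' b' n,
  (forall i, (i <= n)%nat -> a i = a' i) -> (forall i, (i <= n)%nat -> b i = b' i) ->
  conv a b n = conv a' b' n.
Proof.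
  intros. unfold conv. apply sum_eq. intros i Hi. rewrite H, H0; auto; lia.
Qed.

Lemma step_ext : forall b b' n, (forall i, (i < n)%nat -> b i = b' i) -> step b n = step b' n.
Proof.
  intros b b' n H. unfold step.
  assert (E1 : sh1 b n = sh1 b' n) by (destruct n; simpl; auto).
  assert (C2 : forall m, (m < n)%nat -> conv b b m = conv b' b' m).
  { intros m Hm. apply conv_ext; intros; apply H; lia. }
  assert (C3 : forall m, (m < n)%nat -> conv b (conv b b) m = conv b' (conv b' b') m).
  { intros m Hm. apply conv_ext; intros; [apply H; lia|]. apply C2; lia. }
  assert (E2 : sh1 (conv b b) n = sh1 (conv b' b') n) by (destruct n; simpl; auto).
  assert (E3 : sh2 (conv b b) n = sh2 (conv b' b') n) by (destruct n as [|[|n]]; simpl; auto).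
  assert (E4 : sh1 (conv b (conv b b)) n = sh1 (conv b' (conv b' b')) n) by (destruct n; simpl; auto).
  assert (E5 : sh2 (conv b (conv b b)) n = sh2 (conv b' (conv b' b')) n) by (destruct n as [|[|n]]; simpl; auto).
  assert (E6 : sh3 (conv b (conv b b)) n = sh3 (conv b' (conv b' b')) n) by (destruct n as [|[|[|n]]]; simpl; auto).
  rewrite E1, E2, E3, E4, E5, E6. reflexivity.
Qed.

Lemma acoef_step : forall n, acoef n = step acoef n.
Proof.
  intro n. unfold acoef at 1. simpl. rewrite Nat.eqb_refl.
  apply step_ext. intros. apply pre_ok. auto.
Qed.

Lemma sum_rev : forall f n, sum_f_R0 f n = sum_f_R0 (fun i => f (n - i)%nat) n.
Proof.
  intros f n. revert f. induction n; intros f.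
  - simpl. reflexivity.
  - rewrite tech5. rewrite (decomp_sum (fun i => f (S n - i)%nat) (S n)) by lia.
    simpl pred. rewrite Nat.sub_0_r. rewrite IHn. 
    replace (sum_f_R0 (fun i : nat => f (S n - S i)%nat) n) with (sum_f_R0 (fun i => f (n - i)%nat) n).
    + lra.
    + apply sum_eq. intros. f_equal.
Qed.

Lemma sum_scal_l : forall c f n, sum_f_R0 (fun i => c * f i) n = c * sum_f_R0 f n.
Proof. intros c f n; induction n; simpl; [ring| rewrite IHn; ring]. Qed.

Lemma inv_sq_sum : forall n, sum_f_R0 (fun i => / (INR (S i))^2) n <= 2 - / INR (S n).
Proof.
  induction n.
  - simpl. lra.
  - rewrite tech5. 
    assert (H0 : 0 <= INR n) by apply pos_INR.
    rewrite !S_INR in *. 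
    assert (/ (INR n + 1 + 1) ^ 2 + / (INR n + 1 + 1) <= / (INR n + 1)).
    { set (x := INR n) in *. 
      apply Rle_trans with (/ ((x+1)*(x+1+1)) + /(x+1+1)).
      - apply Rplus_le_compat_r. apply Rinv_le_contravar. nra. nra.
      - right. field. lra. }
    lra.
Qed.

Lemma conv_wt_sum : forall m,
  sum_f_R0 (fun i => / (INR (S i))^2 * / (INR (S (m - i)))^2) m <= 8 / (INR (S (S m)))^2.
Proof.
  intro m.
  apply Rle_trans with (sum_f_R0 (fun i => 2 / (INR (S (S m)))^2 * (/ (INR (S i))^2 + / (INR (S (m - i)))^2)) m).
  - apply sum_Rle. intros i Hi.
    assert (Hab : INR (S i) + INR (S (m - i)) = INR (S (S m))).
    { rewrite <- plus_INR. f_equal. lia. }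
    rewrite <- Hab.
    assert (0 < INR (S i)) by (apply lt_0_INR; lia).
    assert (0 < INR (S (m-i))) by (apply lt_0_INR; lia).
    set (a := INR (S i)) in *. set (b := INR (S (m - i))) in *.
    assert (E : 2 / (a + b) ^ 2 * (/ a ^ 2 + / b ^ 2) - / a ^ 2 * / b ^ 2
              = (a - b)^2 / ((a+b)^2 * a^2 * b^2)).
    { field. repeat split; apply Rgt_not_eq; lra. }
    assert (0 <= (a - b)^2 / ((a+b)^2 * a^2 * b^2)).
    { apply Rmult_le_pos. apply pow2_ge_0. left. apply Rinv_0_lt_compat. 
      apply Rmult_lt_0_compat. apply Rmult_lt_0_compat. nra. nra. nra. }
    lra.
  - rewrite sum_scal_l. 
    rewrite sum_plus.
    rewrite (sum_rev (fun i => / INR (S (m - i)) ^ 2) m).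
    replace (sum_f_R0 (fun i : nat => / INR (S (m - (m - i))) ^ 2) m)
      with (sum_f_R0 (fun i => / (INR (S i))^2) m).
    2:{ apply sum_eq. intros. do 3 f_equal. lia. }
    pose proof (inv_sq_sum m).
    assert (0 < / INR (S m)) by (apply Rinv_0_lt_compat, lt_0_INR; lia).
    assert (0 < 2 / INR (S (S m)) ^ 2).
    { apply Rdiv_lt_0_compat. lra. apply pow_lt. apply lt_0_INR; lia. }
    unfold Rdiv. 
    replace (8 * / INR (S (S m)) ^ 2) with ((2 * / INR (S (S m)) ^ 2) * 4) by ring.
    apply Rmult_le_compat_l. lra. lra.
Qed.

Definition Kc : R := 4000.
Definition wt (m : nat) : R := Kc ^ m / (INR (S m))^2.

Lemma wt_pos : forall m, 0 < wt m.
Proof. intro m. unfold wt, Kc. apply Rdiv_lt_0_compat. apply pow_lt; lra. apply pow_lt, lt_0_INR; lia. Qed.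

Lemma conv_bound : forall b c al be m, 0 <= al -> 0 <= be ->
  (forall i, (i <= m)%nat -> Rabs (b i) <= al * wt i) ->
  (forall i, (i <= m)%nat -> Rabs (c i) <= be * wt i) ->
  Rabs (conv b c m) <= 8 * al * be * wt m.
Proof.
  intros b c al be m Ha Hb Hbb Hcb. unfold conv.
  eapply Rle_trans. apply Rsum_abs.
  apply Rle_trans with (sum_f_R0 (fun i => al * be * Kc ^ m * (/ (INR (S i))^2 * / (INR (S (m - i)))^2)) m).
  - apply sum_Rle. intros i Hi. rewrite Rabs_mult.
    replace (al * be * Kc ^ m * (/ INR (S i) ^ 2 * / INR (S (m - i)) ^ 2))
      with ((al * wt i) * (be * wt (m - i))).
    + apply Rmult_le_compat; try apply Rabs_pos. apply Hbb; lia. apply Hcb; lia.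
    + assert (EK : Kc ^ m = Kc ^ i * Kc ^ (m - i)).
      { rewrite <- pow_add. f_equal. lia. }
      unfold wt. rewrite EK. unfold Rdiv. ring.
  - rewrite sum_scal_l. pose proof (conv_wt_sum m).
    assert (0 <= al * be * Kc ^ m) by (apply Rmult_le_pos; [nra| apply pow_le; unfold Kc; lra]).
    apply Rle_trans with (al * be * Kc ^ m * (8 / INR (S (S m)) ^ 2)).
    + apply Rmult_le_compat_l; auto.
    + unfold wt. unfold Rdiv. 
      replace (8 * al * be * (Kc ^ m * / INR (S m) ^ 2)) with (al * be * Kc ^ m * (8 * / INR (S m) ^2)) by ring.
      apply Rmult_le_compat_l; auto. apply Rmult_le_compat_l; [lra|].
      apply Rinv_le_contravar. apply pow_lt, lt_0_INR; lia.
      apply pow_incr. split. apply pos_INR. apply le_INR. lia.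
Qed.

Lemma arith_sh2 : forall x y K c, 0 <= x -> 0 < y -> 1 <= K -> 0 <= c ->
  c * (y / (x+1)^2) <= 9 * c * (K * y / (x+1+1)^2).
Proof.
  intros x y K c Hx Hy HK Hc.
  assert (c * (y / (x+1)^2) = c * y * / (x+1)^2) by (unfold Rdiv; ring).
  assert (9 * c * (K * y / (x+1+1)^2) = c * y * (9 * K / (x+1+1)^2)) by (unfold Rdiv; ring).
  rewrite H, H0. apply Rmult_le_compat_l. nra.
  apply Rle_trans with (9 / (x+1+1)^2).
  - apply Rle_trans with (9 / (3*(x+1))^2).
    + right. field. lra.
    + unfold Rdiv. apply Rmult_le_compat_l. lra. apply Rinv_le_contravar; nra.
  - unfold Rdiv. apply Rmult_le_compat_r. apply Rlt_le, Rinv_0_lt_compat; nra. lra.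
Qed.

Lemma arith_sh3 : forall x y K c, 0 <= x -> 0 < y -> 1 <= K -> 0 <= c ->
  c * (y / (x+1)^2) <= 9 * c * (K * (K * y) / (x+1+1+1)^2).
Proof.
  intros x y K c Hx Hy HK Hc.
  assert (c * (y / (x+1)^2) = c * y * / (x+1)^2) by (unfold Rdiv; ring).
  assert (9 * c * (K * (K * y) / (x+1+1+1)^2) = c * y * (9 * (K * K) / (x+1+1+1)^2)) by (unfold Rdiv; ring).
  rewrite H, H0. apply Rmult_le_compat_l. nra.
  apply Rle_trans with (9 / (x+1+1+1)^2).
  - apply Rle_trans with (9 / (3*(x+1))^2).
    + right. field. lra.
    + unfold Rdiv. apply Rmult_le_compat_l. lra. apply Rinv_le_contravar; nra.
  - unfold Rdiv. apply Rmult_le_compat_r. apply Rlt_le, Rinv_0_lt_compat; nra. nra.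
Qed.

Lemma sh_bounds : forall s c N, 0 <= c -> (forall m, (m <= N)%nat -> Rabs (s m) <= c * wt m) ->
  Rabs (sh1 s (S N)) <= 9 * c * wt N /\ Rabs (sh2 s (S N)) <= 9 * c * wt N /\
  Rabs (sh3 s (S N)) <= 9 * c * wt N.
Proof.
  intros s c N Hc H. assert (HK : 1 <= Kc) by (unfold Kc; lra).
  split; [|split].
  - simpl. eapply Rle_trans. apply H; lia. pose proof (wt_pos N). nra.
  - destruct N as [|p]; simpl sh2. rewrite Rabs_R0. pose proof (wt_pos 0). nra.
    eapply Rle_trans. apply H; lia. unfold wt. 
    assert (0 <= INR p) by apply pos_INR. rewrite !S_INR.
    assert (0 < Kc ^ p) by (apply pow_lt; lra).
    rewrite <- tech_pow_Rmult. apply arith_sh2; auto.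
  - destruct N as [|[|p]]; simpl sh3. rewrite Rabs_R0. pose proof (wt_pos 0). nra.
    rewrite Rabs_R0. pose proof (wt_pos 1). nra.
    eapply Rle_trans. apply H; lia. unfold wt. 
    assert (0 <= INR p) by apply pos_INR. rewrite !S_INR.
    assert (0 < Kc ^ p) by (apply pow_lt; lra).
    rewrite <- !tech_pow_Rmult. apply arith_sh3; auto.
Qed.

Lemma frac_le : forall a b c d, 0 < b -> 0 < d -> a * d <= c * b -> a / b <= c / d.
Proof.
  intros a b c d Hb Hd H.
  replace (a / b) with ((a * d) * / (b * d)) by (field; lra).
  replace (c / d) with ((c * b) * / (b * d)) by (field; lra).
  apply Rmult_le_compat_r. apply Rlt_le, Rinv_0_lt_compat. nra. auto.
Qed.

Lemma arith_main : forall x y, 0 <= x -> 0 < y ->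
  (x + 3890) * (y / (x+1)^2) / (2 * (x + 1) + 2) <= Kc * y / (x+1+1)^2.
Proof.
  intros x y Hx Hy.
  replace ((x + 3890) * (y / (x+1)^2) / (2 * (x + 1) + 2)) with (y * ((x+3890) / ((x+1)^2 * (2*x+4)))) by (field; lra).
  replace (Kc * y / (x+1+1)^2) with (y * (Kc / (x+1+1)^2)) by (field; lra).
  apply Rmult_le_compat_l. lra. apply frac_le. nra. nra. unfold Kc.
  assert (0 <= x * x) by nra. assert (0 <= x*x*x) by nra. nra.
Qed.

Lemma acoef_bound : forall n, Rabs (acoef n) <= wt n.
Proof.
  assert (forall N n, (n <= N)%nat -> Rabs (acoef n) <= wt n).
  2:{ intro n. apply (H n). lia. }
  induction N; intros n Hn.
  - assert (n = 0%nat) by lia. subst. rewrite acoef_step. unfold step, wt. simpl.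
    replace ((2 - 1 * 0 + 2 * 0 + 4 * 0 - 0 - 3 * 0 - 2 * 0) / (2 * 0 + 2)) with 1 by field.
    rewrite Rabs_R1. right. field.
  - destruct (Compare_dec.le_lt_dec n N) as [Hl|Hl]. apply IHN; auto.
    assert (n = S N) by lia. subst n. clear Hn Hl.
    set (a := acoef) in *.
    assert (B2 : forall m, (m <= N)%nat -> Rabs (conv a a m) <= 8 * wt m).
    { intros m Hm. replace (8 * wt m) with (8 * 1 * 1 * wt m) by ring.
      apply conv_bound; try lra; intros; rewrite Rmult_1_l; apply IHN; lia. }
    assert (B3 : forall m, (m <= N)%nat -> Rabs (conv a (conv a a) m) <= 64 * wt m).
    { intros m Hm. replace (64 * wt m) with (8 * 1 * 8 * wt m) by ring.
      apply conv_bound; try lra; intros. rewrite Rmult_1_l; apply IHN; lia. apply B2; lia. }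
    destruct (sh_bounds (conv a a) 8 N) as [S21 [S22 S23]]; [lra|auto|].
    destruct (sh_bounds (conv a (conv a a)) 64 N) as [S31 [S32 S33]]; [lra|auto|].
    assert (A1 : Rabs (sh1 a (S N)) <= wt N) by (simpl; apply IHN; lia).
    unfold a. rewrite acoef_step. fold a. unfold step.
    simpl (Nat.eqb (S N) 0). 
    assert (HN : 0 <= INR N) by apply pos_INR.
    pose proof (wt_pos N) as HwN.
    set (t1 := sh1 a (S N)) in *. set (t2 := sh2 (conv a a) (S N)) in *.
    set (t3 := sh1 (conv a a) (S N)) in *. set (t4 := sh3 (conv a (conv a a)) (S N)) in *.
    set (t5 := sh2 (conv a (conv a a)) (S N)) in *. set (t6 := sh1 (conv a (conv a a)) (S N)) in *.
    rewrite Rabs_div by (rewrite S_INR; lra).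
    rewrite (Rabs_right (2 * INR (S N) + 2)) by (rewrite S_INR; lra).
    apply Rle_trans with ((INR N + 3890) * wt N / (2 * INR (S N) + 2)).
    + unfold Rdiv. apply Rmult_le_compat_r. apply Rlt_le, Rinv_0_lt_compat. rewrite S_INR; lra.
      rewrite !S_INR.
      apply Rabs_le_between in A1, S21, S22, S23, S31, S32, S33.
      apply Rabs_le. split; nra.
    + unfold wt. rewrite !S_INR. rewrite <- tech_pow_Rmult.
      replace (2 * (INR N + 1) + 2) with (2 * (INR N + 1) + 2) by ring.
      apply arith_main; auto. apply pow_lt; unfold Kc; lra.
Qed.

Lemma radius_of_bound : forall b c, 0 <= c -> (forall n, Rabs (b n) <= c * wt n) ->
  Rbar_le (/ Kc) (CV_radius b).
Proof.
  intros b c Hc H. destruct (CV_radius_bounded b) as [Hub _].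
  apply Hub. exists c. intro n. rewrite Rabs_mult.
  rewrite <- RPow_abs. rewrite (Rabs_right (/Kc)) by (apply Rle_ge, Rlt_le, Rinv_0_lt_compat; unfold Kc; lra).
  assert (0 < (/Kc)^n) by (apply pow_lt, Rinv_0_lt_compat; unfold Kc; lra).
  apply Rle_trans with (c * wt n * (/Kc)^n).
  - apply Rmult_le_compat_r. lra. auto.
  - unfold wt. rewrite pow_inv.
    assert (1 <= INR (S n) ^ 2). { rewrite <- (pow1 2). apply pow_incr. split. lra. rewrite S_INR. pose proof (pos_INR n). lra. }
    assert (0 < Kc ^ n) by (apply pow_lt; unfold Kc; lra).
    replace (c * (Kc ^ n / INR (S n) ^ 2) * / Kc ^ n) with (c * / INR (S n) ^ 2) by fld.
    rewrite <- (Rmult_1_r c) at 2. apply Rmult_le_compat_l; auto.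
    rewrite <- Rinv_1. apply Rinv_le_contravar; lra.
Qed.

Definition Q2 := conv acoef acoef.
Definition Q3 := conv acoef Q2.

Lemma Q2_bound : forall n, Rabs (Q2 n) <= 8 * wt n.
Proof. intro n. replace (8 * wt n) with (8*1*1*wt n) by ring. apply conv_bound; try lra; intros; rewrite Rmult_1_l; apply acoef_bound. Qed.
Lemma Q3_bound : forall n, Rabs (Q3 n) <= 64 * wt n.
Proof. intro n. replace (64 * wt n) with (8*1*8*wt n) by ring. apply conv_bound; try lra; intros. rewrite Rmult_1_l; apply acoef_bound. apply Q2_bound. Qed.

Definition rho := / Kc.
Lemma rho_pos : 0 < rho. Proof. unfold rho, Kc. apply Rinv_0_lt_compat. lra. Qed.

Lemma in_disk : forall b c z, 0 <= c -> (forall n, Rabs (b n) <= c * wt n) -> Rabs z < rho -> Rbar_lt (Rabs z) (CV_radius b).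
Proof.
  intros b c z Hc H Hz. pose proof (radius_of_bound b c Hc H).
  destruct (CV_radius b) as [r| |]; unfold rho in Hz; simpl in *; auto. lra.
Qed.

Lemma rA : forall z, Rabs z < rho -> Rbar_lt (Rabs z) (CV_radius acoef).
Proof. intros. apply (in_disk _ 1); auto; try lra. intros; rewrite Rmult_1_l; apply acoef_bound. Qed.
Lemma rQ2 : forall z, Rabs z < rho -> Rbar_lt (Rabs z) (CV_radius Q2).
Proof. intros. apply (in_disk _ 8); auto; try lra. apply Q2_bound. Qed.
Lemma rQ3 : forall z, Rabs z < rho -> Rbar_lt (Rabs z) (CV_radius Q3).
Proof. intros. apply (in_disk _ 64); auto; try lra. apply Q3_bound. Qed.

Definition Sser (z : R) : R := PSeries acoef z.

Lemma const_sum : forall c z N, sum_f_R0 (fun n => (match n with O => c | _ => 0 end) * z ^ n) N = c.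
Proof. intros. induction N. simpl. ring. rewrite tech5, IHN. ring. Qed.

Lemma const_pseries : forall c (z : R), is_pseries (fun n => match n with O => c | _ => 0 end) z c.
Proof.
  intros c z. apply is_pseries_R. unfold is_series.
  apply filterlim_ext with (fun _ => c).
  - intro N. rewrite sum_n_Reals. symmetry. apply const_sum.
  - apply filterlim_const.
Qed.

Definition Dser (z : R) : R := PSeries (PS_derive acoef) z.

Lemma coef_zero : forall n,
  PS_incr_1 (PS_incr_1 (PS_derive acoef)) n + 2 * PS_incr_1 (PS_derive acoef) n
  + 2 * (PS_incr_1 acoef n + acoef n) + (match n with O => -2 | _ => 0 end)
  + (-2) * (PS_incr_1 (PS_incr_1 Q2) n + 2 * PS_incr_1 Q2 n)
  + (PS_incr_1 (PS_incr_1 (PS_incr_1 Q3)) n + 3 * PS_incr_1 (PS_incr_1 Q3) n + 2 * PS_incr_1 Q3 n) = 0.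
Proof.
  intro n. pose proof (acoef_step n) as E. unfold step in E. fold Q2 in E. fold Q3 in E.
  destruct n as [|[|m]].
  - simpl in *. field_simplify in E. unfold zero; simpl. lra.
  - simpl in *. unfold zero; simpl. unfold PS_derive. simpl INR in *. field_simplify in E. lra.
  - simpl sh1 in E; simpl sh2 in E; simpl sh3 in E. simpl (Nat.eqb _ 0) in E.
    unfold PS_incr_1, PS_derive. 
    destruct m as [|m]. 
    + unfold zero; simpl. simpl INR in E. field_simplify in E. simpl INR. lra.
    + rewrite !S_INR in *. 
      assert (0 <= INR m) by apply pos_INR.
      apply (Rmult_eq_compat_r (2 * (INR m + 1 + 1 + 1) + 2)) in E.
      unfold Rdiv in E. rewrite Rmult_assoc, Rinv_l in E by nz. rewrite Rmult_1_r in E.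
      lra.
Qed.

Lemma ser_ode : forall z, Rabs z < rho ->
  (z^2 + 2*z) * Dser z + 2*(z+1) * Sser z - 2 - 2*(z^2+2*z) * (Sser z)^2
  + (z^3+3*z^2+2*z)*(Sser z)^3 = 0.
Proof.
  intros z Hz.
  assert (HA : is_pseries acoef z (Sser z)) by (apply PSeries_correct, CV_radius_inside, rA; auto).
  assert (HD : is_pseries (PS_derive acoef) z (Dser z)).
  { apply PSeries_correct, CV_radius_inside. rewrite CV_radius_derive. apply rA; auto. }
  assert (H2 : is_pseries Q2 z (Sser z * Sser z)) by (apply is_pseries_mult; auto; apply rA; auto).
  assert (H3 : is_pseries Q3 z (Sser z * (Sser z * Sser z))).
  { apply is_pseries_mult; auto. apply rA; auto. apply rQ2; auto. }
  pose proof (is_pseries_incr_1 _ _ _ (is_pseries_incr_1 _ _ _ HD)) as T1.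
  pose proof (is_pseries_scal 2 _ _ _ (Rmult_comm _ _) (is_pseries_incr_1 _ _ _ HD)) as T2.
  pose proof (is_pseries_scal 2 _ _ _ (Rmult_comm _ _) (is_pseries_plus _ _ _ _ _ (is_pseries_incr_1 _ _ _ HA) HA)) as T3.
  pose proof (const_pseries (-2) z) as T4.
  pose proof (is_pseries_scal (-2) _ _ _ (Rmult_comm _ _) (is_pseries_plus _ _ _ _ _
      (is_pseries_incr_1 _ _ _ (is_pseries_incr_1 _ _ _ H2))
      (is_pseries_scal 2 _ _ _ (Rmult_comm _ _) (is_pseries_incr_1 _ _ _ H2)))) as T5.
  pose proof (is_pseries_plus _ _ _ _ _ (is_pseries_plus _ _ _ _ _
      (is_pseries_incr_1 _ _ _ (is_pseries_incr_1 _ _ _ (is_pseries_incr_1 _ _ _ H3)))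
      (is_pseries_scal 3 _ _ _ (Rmult_comm _ _) (is_pseries_incr_1 _ _ _ (is_pseries_incr_1 _ _ _ H3))))
      (is_pseries_scal 2 _ _ _ (Rmult_comm _ _) (is_pseries_incr_1 _ _ _ H3))) as T6.
  pose proof (is_pseries_plus _ _ _ _ _ (is_pseries_plus _ _ _ _ _ (is_pseries_plus _ _ _ _ _
     (is_pseries_plus _ _ _ _ _ (is_pseries_plus _ _ _ _ _ T1 T2) T3) T4) T5) T6) as T.
  apply is_pseries_ext with (b := fun _ => 0) in T.
  2:{ intro n. pose proof (coef_zero n) as C. exact C. }
  apply is_pseries_unique in T.
  assert (T0 : PSeries (fun _ => 0) z = 0).
  { apply is_pseries_unique. apply is_pseries_ext with (a := fun n => match n with O => 0 | _ => 0 end).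
    intro n; destruct n; auto. apply const_pseries. }
  rewrite T0 in T. unfold scal, plus in T; simpl in T. unfold mult in T; simpl in T.
  rewrite T. ring.
Qed.

Lemma Sser_bound : forall z, Rabs z <= rho / 2 -> 3/4 <= Sser z <= 5/4.
Proof.
  intros z Hz.
  assert (Hr : 0 < rho) by apply rho_pos.
  assert (Hzr : Rabs z < rho) by lra.
  assert (HT : forall k, Rabs (acoef (S k) * z ^ (S k)) <= / 8 * (/2)^k).
  { intro k. rewrite Rabs_mult, <- RPow_abs.
    apply Rle_trans with (wt (S k) * (rho/2)^(S k)).
    - apply Rmult_le_compat. apply Rabs_pos. apply pow_le, Rabs_pos. apply acoef_bound.
      apply pow_incr. split; auto. apply Rabs_pos.
    - unfold wt, rho. rewrite !S_INR. pose proof (pos_INR k).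
      assert (E : Kc ^ S k / (INR k + 1 + 1) ^ 2 * (/ Kc / 2) ^ S k = (/2)^(S k) / (INR k + 1 + 1)^2).
      { unfold Rdiv. rewrite !Rpow_mult_distr. rewrite pow_inv. unfold Kc. fld. }
      rewrite E. simpl pow. 
      assert (0 < (/2)^k) by (apply pow_lt; lra).
      apply Rle_trans with (/ 2 * (/ 2) ^ k / 4).
      + unfold Rdiv. apply Rmult_le_compat_l. nra. apply Rinv_le_contravar; nra.
      + right; field. }
  assert (Hgeo : ex_series (fun k => /8 * (/2)^k)).
  { apply (ex_series_scal_l (/8) (fun k => (/2)^k)). eexists. apply is_series_geom. rewrite Rabs_right; lra. }
  assert (Hex : ex_series (fun k => acoef k * z ^ k)).
  { apply ex_series_incr_1. apply (@ex_series_le R_AbsRing R_CompleteNormedModule) with (b := fun k => /8 * (/2)^k); auto. }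
  assert (HS : Sser z = Series (fun k => acoef k * z ^ k)).
  { unfold Sser. apply is_pseries_unique. apply is_pseries_R. apply Series_correct. auto. }
  rewrite HS, Series_incr_1 by auto.
  assert (Ha0 : acoef 0 = 1).
  { rewrite acoef_step. unfold step. simpl. field. }
  rewrite Ha0. simpl pow. rewrite Rmult_1_r.
  assert (Htail : Rabs (Series (fun k => acoef (S k) * z ^ S k)) <= 1/4).
  { eapply Rle_trans. apply Series_Rabs. apply (@ex_series_le R_AbsRing R_CompleteNormedModule) with (b := fun k => /8 * (/2)^k); auto.
    intro n. unfold norm; simpl. rewrite Rabs_Rabsolu. apply HT.
    apply Rle_trans with (Series (fun k => /8 * (/2)^k)).
    apply Series_le; auto. intro n; split. apply Rabs_pos. apply HT.
    rewrite Series_scal_l. 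
    assert (Eg : Series (pow (/2)) = / (1 - /2)) by (apply is_series_unique, (is_series_geom (/2)); rewrite Rabs_right; lra).
    rewrite Eg.
    right; field. }
  apply Rabs_le_between in Htail. simpl in Htail. lra.
Qed.

Lemma cplus {U : UniformSpace} (f g : U -> R) x : continuous f x -> continuous g x -> continuous (fun t => f t + g t) x.
Proof. intros. apply (continuous_plus f g); auto. Qed.
Lemma cmult {U : UniformSpace} (f g : U -> R) x : continuous f x -> continuous g x -> continuous (fun t => f t * g t) x.
Proof. intros. apply (continuous_mult f g); auto. Qed.
Lemma copp {U : UniformSpace} (f : U -> R) x : continuous f x -> continuous (fun t => - f t) x.
Proof. intros. apply (continuous_opp f); auto. Qed.
Lemma cminus {U : UniformSpace} (f g : U -> R) x : continuous f x -> continuous g x -> continuous (fun t => f t - g t) x.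
Proof. intros. apply cplus; auto. apply copp; auto. Qed.
Lemma cconst {U : UniformSpace} (c : R) x : continuous (fun _ : U => c) x.
Proof. apply continuous_const. Qed.
Lemma cinv {U : UniformSpace} (f : U -> R) x : continuous f x -> f x <> 0 -> continuous (fun t => / f t) x.
Proof. intros. apply (continuous_comp f Rinv). auto. apply continuity_pt_filterlim. apply continuity_pt_inv; auto. apply derivable_continuous_pt, derivable_pt_id. Qed.
Lemma cdiv {U : UniformSpace} (f g : U -> R) x : continuous f x -> continuous g x -> g x <> 0 -> continuous (fun t => f t / g t) x.
Proof. intros. apply cmult; auto. apply cinv; auto. Qed.
Lemma cpow {U : UniformSpace} (f : U -> R) n x : continuous f x -> continuous (fun t => f t ^ n) x.
Proof. intros. induction n. simpl. apply cconst. simpl. apply cmult; auto. Qed.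
Lemma cabs {U : UniformSpace} (f : U -> R) x : continuous f x -> continuous (fun t => Rabs (f t)) x.
Proof. intros. apply (continuous_comp f Rabs); auto. apply continuous_Rabs. Qed.
Lemma csqrt {U : UniformSpace} (f : U -> R) x : continuous f x -> continuous (fun t => sqrt (f t)) x.
Proof. intros. apply (continuous_comp f sqrt); auto. 
  destruct (Rle_dec 0 (f x)).
  - apply continuity_pt_filterlim. apply continuity_pt_sqrt; auto.
  - apply Rnot_le_lt in n. apply continuity_pt_filterlim.
    unfold continuity_pt, continue_in, limit1_in, limit_in. intros eps Heps.
    exists (- f x). split. lra. intros y [_ Hy]. simpl in Hy. unfold R_dist in *.
    apply Rabs_def2 in Hy. rewrite !sqrt_neg_0 by lra. simpl. unfold R_dist. rewrite Rminus_0_r, Rabs_R0. auto.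
Qed.
Lemma Rmax_abs a b : Rmax a b = (a + b + Rabs (a - b)) / 2.
Proof. unfold Rmax. destruct (Rle_dec a b). rewrite Rabs_left1 by lra. field. rewrite Rabs_right by lra. field. Qed.
Lemma Rmin_abs a b : Rmin a b = (a + b - Rabs (a - b)) / 2.
Proof. unfold Rmin. destruct (Rle_dec a b). rewrite Rabs_left1 by lra. field. rewrite Rabs_right by lra. field. Qed.
Lemma cmax {U : UniformSpace} (f g : U -> R) x : continuous f x -> continuous g x -> continuous (fun t => Rmax (f t) (g t)) x.
Proof. intros. apply continuous_ext with (fun t => (f t + g t + Rabs (f t - g t)) / 2).
  intro; rewrite Rmax_abs; auto. apply cdiv. apply cplus. apply cplus; auto. apply cabs, cminus; auto. apply cconst. lra. Qed.
Lemma cmin {U : UniformSpace} (f g : U -> R) x : continuous f x -> continuous g x -> continuous (fun t => Rmin (f t) (g t)) x.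
Proof. intros. apply continuous_ext with (fun t => (f t + g t - Rabs (f t - g t)) / 2).
  intro; rewrite Rmin_abs; auto. apply cdiv. apply cminus. apply cplus; auto. apply cabs, cminus; auto. apply cconst. lra. Qed.

Lemma cid x : continuous (fun t : R => t) x.
Proof. apply continuous_id. Qed.

Lemma exRIntc (f : R -> R) a b : (forall z, Rmin a b <= z <= Rmax a b -> continuous f z) -> ex_RInt f a b.
Proof. intros H. exact (ex_RInt_continuous (V:=R_CompleteNormedModule) f a b H). Qed.

Lemma lip_of_deriv : forall (f df : R -> R) M, (forall x, is_derive f x (df x)) -> (forall x, Rabs (df x) <= M) ->
  forall s t, Rabs (f s - f t) <= M * Rabs (s - t).
Proof.
  intros f df M Hd Hb s t.
  destruct (MVT_gen f t s df) as [c [Hc E]].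
  - intros; auto.
  - intros. apply continuity_pt_filterlim. apply (ex_derive_continuous (K := R_AbsRing) (V := R_NormedModule) f). eexists; apply Hd.
  - rewrite E, Rabs_mult. apply Rmult_le_compat_r. apply Rabs_pos. auto.
Qed.

Lemma geom_zero : forall a M, (forall n, Rabs a <= M * (/2)^n) -> a = 0.
Proof.
  intros a M H.
  assert (Hl : is_lim_seq (fun n => M * (/2)^n) 0).
  { replace (Finite 0) with (Rbar_mult M 0) by (simpl; f_equal; ring).
    apply is_lim_seq_scal_l. apply is_lim_seq_geom. rewrite Rabs_right; lra. }
  assert (Rbar_le (Rabs a) 0).
  { apply is_lim_seq_le with (u := fun _ => Rabs a) (v := fun n => M * (/2)^n); auto.
    apply is_lim_seq_const. }
  simpl in H0. pose proof (Rabs_pos a). 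
  destruct (Req_dec a 0); auto. pose proof (Rabs_pos_lt a H2). lra.
Qed.

Lemma RInt_abs_bound : forall (f g : R -> R) a b, a <= b ->
  (forall x, a <= x <= b -> continuous f x) -> (forall x, a <= x <= b -> continuous g x) ->
  (forall x, a <= x <= b -> Rabs (f x) <= g x) -> Rabs (RInt f a b) <= RInt g a b.
Proof.
  intros f g a b Hab Hf Hg H.
  assert (ef : ex_RInt f a b) by (apply exRIntc; intros; apply Hf; rewrite Rmin_left, Rmax_right in *; lra).
  assert (eg : ex_RInt g a b) by (apply exRIntc; intros; apply Hg; rewrite Rmin_left, Rmax_right in *; lra).
  eapply Rle_trans. apply abs_RInt_le; auto.
  apply RInt_le; auto.
  apply exRIntc. intros. apply (continuous_comp f Rabs). apply Hf; rewrite Rmin_left, Rmax_right in *; lra.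
  apply continuous_Rabs.
  intros; apply H; lra.
Qed.

Lemma barrier : forall (f df : R -> R) a t, a <= t ->
  (forall z, a <= z <= t -> continuous f z) ->
  (forall z, a < z <= t -> is_derive f z (df z)) ->
  (forall z, a < z <= t -> f z < 0 -> 0 <= df z) ->
  0 <= f a -> 0 <= f t.
Proof.
  intros f df a t Hat Hc Hd Hs Ha.
  destruct (Rle_lt_dec 0 (f t)) as [|Hft]; auto. exfalso.
  set (E := fun x => a <= x <= t /\ 0 <= f x).
  assert (Hb : bound E) by (exists t; intros x [[_ Hx] _]; auto).
  assert (He : exists x, E x) by (exists a; split; auto; lra).
  destruct (completeness E Hb He) as [s [Hub Hlub]].
  assert (Has : a <= s) by (apply Hub; split; auto; lra).
  assert (Hst : s <= t) by (apply Hlub; intros x [[_ Hx] _]; auto).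
  assert (Hneg : forall x, s < x <= t -> f x < 0).
  { intros x Hx. destruct (Rlt_le_dec (f x) 0); auto. exfalso.
    assert (x <= s) by (apply Hub; split; auto; lra). lra. }
  assert (Hfs : 0 <= f s).
  { destruct (Rle_lt_dec 0 (f s)) as [|Hfs]; auto. exfalso.
    assert (Has' : a < s) by (destruct (Req_dec a s); [subst; lra| lra]).
    pose proof (Hc s (conj Has Hst)) as Hcs.
    apply continuity_pt_filterlim in Hcs.
    destruct (Hcs (- f s) ltac:(lra)) as [del [Hdel Hf]].
    set (s' := Rmax a (s - del/2)).
    assert (Hs'lt : s' < s) by (unfold s'; apply Rmax_lub_lt; lra).
    assert (s' <= s) by lra.
    assert (s <= s').
    { apply Hlub. intros x [[Hx1 Hx2] Hx3]. destruct (Rle_lt_dec x s') as [|Hx]; auto.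
      assert (x <= s) by (apply Hub; split; auto).
      exfalso. assert (Rabs (x - s) < del).
      { unfold s' in Hx. rewrite Rabs_left1 by lra. assert (s - del/2 < x) by (eapply Rle_lt_trans; [apply Rmax_r| apply Hx]). lra. }
      destruct (Req_dec x s) as [Exs|Exs]. subst x. lra.
      assert (Dx : D_x no_cond s x) by (split; [exact I| auto]).
      assert (Dd : dist R_met x s < del) by (simpl; unfold R_dist; auto).
      specialize (Hf x (conj Dx Dd)). 
      simpl in Hf. unfold R_dist in Hf. apply Rabs_def2 in Hf. lra. }
    lra. }
  assert (Hst' : s < t) by (destruct (Req_dec s t); [subst; lra|lra]).
  pose proof (Hc s (conj Has Hst)) as Hcs. apply continuity_pt_filterlim in Hcs.
  destruct (Hcs (- f t / 2) ltac:(lra)) as [del [Hdel Hf]].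
  set (s' := Rmin t (s + del/2)).
  assert (s < s') by (unfold s'; apply Rmin_glb_lt; lra).
  assert (s' <= t) by (unfold s'; apply Rmin_l).
  assert (Hfs' : f s' > f s - (- f t / 2)).
  { assert (Rabs (s' - s) < del).
    { rewrite Rabs_right by lra. assert (s' <= s + del/2) by (unfold s'; apply Rmin_r). lra. }
    assert (Dx : D_x no_cond s s') by (split; [exact I| lra]).
    assert (Dd : dist R_met s' s < del) by (simpl; unfold R_dist; auto).
    specialize (Hf s' (conj Dx Dd)). simpl in Hf. unfold R_dist in Hf.
    apply Rabs_def2 in Hf. lra. }
  destruct (MVT_gen f s' t df) as [c [Hc1 Ec]].
  - intros x Hx. rewrite Rmin_left, Rmax_right in Hx by lra. apply Hd. lra.
  - intros x Hx. rewrite Rmin_left, Rmax_right in Hx by lra. apply continuity_pt_filterlim. apply Hc. lra.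
  - rewrite Rmin_left, Rmax_right in Hc1 by lra.
    assert (0 <= df c) by (apply Hs; [lra| apply Hneg; lra]).
    assert (f t - f s' >= 0) by (rewrite Ec; apply Rle_ge, Rmult_le_pos; lra).
    lra.
Qed.

Definition z0 := rho / 4.
Definition z2 := rho / 2.
Definition Hf (z : R) := z * (z + 2).
Definition Phi (z y : R) := (2 - 2*(z+1)*y + 2*Hf z*y^2 - (z+1)*Hf z*y^3) / Hf z.
Definition Bd (z : R) := 2 / sqrt (Hf z).
Definition clampY (z y : R) := Rmax 0 (Rmin y (Bd z)).
Definition zc (z : R) := Rmax z z0.
Definition Phic (z y : R) := Phi (zc z) (clampY (zc z) y).

Definition c0 := (z0 + 1) / Hf z0.
Definition B0 := Bd z0.
Definition Lc := 14 * c0 + 4 * B0.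
Definition Cc := 2 / Hf z0 + 2 * c0 * B0 + 2 * B0 ^ 2 + 4 * c0 * B0.

Lemma z0_pos : 0 < z0. Proof. unfold z0. pose proof rho_pos. lra. Qed.
Lemma z0_z2 : z0 < z2. Proof. unfold z0, z2. pose proof rho_pos. lra. Qed.
Lemma rho_small : rho < 1/1000. Proof. unfold rho, Kc. apply Rmult_lt_reg_l with 4000; [lra|]. rewrite Rinv_r by lra. lra. Qed.

Lemma Hf_pos : forall z, 0 < z -> 0 < Hf z.
Proof. intros. unfold Hf. nra. Qed.
Lemma Hf_mono : forall z w, 0 < z -> z <= w -> Hf z <= Hf w.
Proof. intros. unfold Hf. nra. Qed.
Lemma ratio_le : forall w, z0 <= w -> (w + 1) / Hf w <= c0.
Proof.
  intros w Hw. pose proof z0_pos. unfold c0. apply frac_le. apply Hf_pos; lra. apply Hf_pos; lra.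
  unfold Hf. assert (0 <= w - z0) by lra.
  assert (0 <= (w - z0) * z0) by nra. assert (0 <= (w-z0)*(w-z0)*z0) by (apply Rmult_le_pos; nra).
  assert (0 <= (w - z0) * z0 * z0) by (apply Rmult_le_pos; nra). nra.
Qed.
Lemma Bd_sq : forall w, 0 < w -> Hf w * (Bd w)^2 = 4.
Proof. intros w Hw. pose proof (Hf_pos w Hw). unfold Bd. 
  assert (0 < sqrt (Hf w)) by (apply sqrt_lt_R0; auto).
  replace ((2 / sqrt (Hf w))^2) with (4 / (sqrt (Hf w))^2) by fld. rewrite <- Rsqr_pow2, Rsqr_sqrt by lra. fld. Qed.
Lemma Bd_pos : forall w, 0 < w -> 0 < Bd w.
Proof. intros. unfold Bd. apply Rdiv_lt_0_compat. lra. apply sqrt_lt_R0, Hf_pos; auto. Qed.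
Lemma Bd_le : forall w, z0 <= w -> Bd w <= B0.
Proof. intros w Hw. pose proof z0_pos. unfold B0, Bd. unfold Rdiv. apply Rmult_le_compat_l. lra.
  apply Rinv_le_contravar. apply sqrt_lt_R0, Hf_pos; auto. apply sqrt_le_1_alt. apply Hf_mono; lra. Qed.

Lemma clamp_range : forall w y, 0 < w -> 0 <= clampY w y <= Bd w.
Proof. intros. pose proof (Bd_pos w H). unfold clampY, Rmax, Rmin. repeat destruct Rle_dec; lra. Qed.
Lemma clamp_lip : forall w y1 y2, 0 < w -> Rabs (clampY w y1 - clampY w y2) <= Rabs (y1 - y2).
Proof. intros. pose proof (Bd_pos w H). unfold clampY, Rmax, Rmin. 
  repeat destruct Rle_dec; unfold Rabs; repeat destruct Rcase_abs; lra. Qed.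
Lemma clamp_id : forall w y, 0 <= y <= Bd w -> clampY w y = y.
Proof. intros. unfold clampY, Rmax, Rmin. repeat destruct Rle_dec; lra. Qed.
Lemma zc_ge : forall z, z0 <= zc z.
Proof. intros. unfold zc. apply Rmax_r. Qed.

Lemma Phi_diff : forall w u1 u2, 0 < w ->
  Phi w u1 - Phi w u2 = (u1 - u2) * (- 2 * ((w+1)/Hf w) + 2 * (u1 + u2)
      - ((w+1)/Hf w) * (Hf w * u1 * u1 + Hf w * u1 * u2 + Hf w * u2 * u2)).
Proof. intros. pose proof (Hf_pos w H). unfold Phi. fld. Qed.

Lemma Phic_lip : forall z y1 y2, Rabs (Phic z y1 - Phic z y2) <= Lc * Rabs (y1 - y2).
Proof.
  intros z y1 y2. unfold Phic. set (w := zc z). pose proof (zc_ge z). fold w in H.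
  pose proof z0_pos. assert (Hw : 0 < w) by lra.
  pose proof (clamp_range w y1 Hw). pose proof (clamp_range w y2 Hw).
  pose proof (clamp_lip w y1 y2 Hw).
  set (u1 := clampY w y1) in *. set (u2 := clampY w y2) in *.
  rewrite Phi_diff by auto. rewrite Rabs_mult, Rmult_comm.
  apply Rmult_le_compat. apply Rabs_pos. apply Rabs_pos. 2: auto.
  pose proof (ratio_le w H). pose proof (Bd_le w H). pose proof (Bd_sq w Hw) as HBs.
  pose proof (Hf_pos w Hw).
  assert (0 <= (w+1)/Hf w) by (apply Rlt_le, Rdiv_lt_0_compat; lra).
  set (r := (w+1)/Hf w) in *. set (h := Hf w) in *. set (b := Bd w) in *.
  assert (Hb2 : h * (b * b) = 4) by (rewrite <- HBs; ring).
  assert (u1 * u1 <= b * b) by nra. assert (u1 * u2 <= b * b) by nra. assert (u2 * u2 <= b * b) by nra.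
  assert (h * u1 * u1 <= 4) by (rewrite <- Hb2, Rmult_assoc; apply Rmult_le_compat_l; lra).
  assert (h * u1 * u2 <= 4) by (rewrite <- Hb2, Rmult_assoc; apply Rmult_le_compat_l; lra).
  assert (h * u2 * u2 <= 4) by (rewrite <- Hb2, Rmult_assoc; apply Rmult_le_compat_l; lra).
  assert (0 <= h * u1 * u1) by (repeat apply Rmult_le_pos; lra). assert (0 <= h * u1 * u2) by (repeat apply Rmult_le_pos; lra). assert (0 <= h * u2 * u2) by (repeat apply Rmult_le_pos; lra).
  unfold Lc. apply Rabs_le. split; nra.
Qed.

Lemma Phic_bound : forall z y, Rabs (Phic z y) <= Cc.
Proof.
  intros z y. unfold Phic. set (w := zc z). pose proof (zc_ge z). fold w in H.
  pose proof z0_pos. assert (Hw : 0 < w) by lra.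
  pose proof (clamp_range w y Hw). set (u := clampY w y) in *.
  pose proof (ratio_le w H). pose proof (Bd_le w H). pose proof (Bd_sq w Hw).
  pose proof (Hf_pos w Hw). pose proof (Hf_mono z0 w H0 H).
  assert (E : Phi w u = 2 / Hf w - 2 * ((w+1)/Hf w) * u + 2 * u^2 - ((w+1)/Hf w) * (Hf w * u^2) * u).
  { unfold Phi. fld. }
  rewrite E.
  assert (0 <= (w+1)/Hf w) by (apply Rlt_le, Rdiv_lt_0_compat; lra).
  assert (2 / Hf w <= 2 / Hf z0) by (apply frac_le; try lra; apply Hf_pos; lra).
  assert (0 <= 2 / Hf w) by (apply Rlt_le, Rdiv_lt_0_compat; lra).
  set (r := (w+1)/Hf w) in *. set (h := Hf w) in *. set (b := Bd w) in *.
  assert (u * u <= b * b) by nra.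
  assert (h * u^2 <= 4) by (rewrite <- H4; simpl; rewrite !Rmult_1_r; apply Rmult_le_compat_l; lra).
  assert (0 <= h * u^2) by (apply Rmult_le_pos; nra).
  assert (u^2 <= B0^2) by nra.
  assert (0 <= r * u <= c0 * B0) by (split; [apply Rmult_le_pos|apply Rmult_le_compat]; lra).
  assert (0 <= r * (h * u^2) * u <= c0 * 4 * B0).
  { split. repeat apply Rmult_le_pos; lra. apply Rmult_le_compat. apply Rmult_le_pos; lra. lra.
    apply Rmult_le_compat; lra. lra. }
  unfold Cc. fold c0. apply Rabs_le. split; nra.
Qed.

Lemma zc_cont : forall s, continuous zc s.
Proof. intro s. unfold zc. apply (cmax (fun t => t) (fun _ => z0)). apply cid. apply cconst. Qed.

Lemma Phic_cont : forall (f : R -> R) s, continuous f s -> continuous (fun t => Phic t (f t)) s.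
Proof.
  intros f s Hcf. unfold Phic, Phi, clampY, Bd, Hf.
  pose proof (zc_ge s). pose proof z0_pos.
  assert (Hw : continuous zc s) by apply zc_cont.
  assert (HH : 0 < zc s * (zc s + 2)) by nra.
  assert (Hsq : 0 < sqrt (zc s * (zc s + 2))) by (apply sqrt_lt_R0; auto).
  assert (HHc : continuous (fun t => zc t * (zc t + 2)) s) by (apply cmult; auto; apply cplus; auto; apply cconst).
  assert (Hcl : continuous (fun t => Rmax 0 (Rmin (f t) (2 / sqrt (zc t * (zc t + 2))))) s).
  { apply (cmax (fun _ => 0)). apply cconst. apply cmin; auto. apply cdiv. apply cconst. apply csqrt; auto. lra. }
  set (cl := fun t => Rmax 0 (Rmin (f t) (2 / sqrt (zc t * (zc t + 2))))) in *.
  apply cdiv; [|auto|lra].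
  assert (Hw1 : continuous (fun t => zc t + 1) s) by (apply cplus; auto; apply cconst).
  apply cminus; [apply cplus; [apply cminus|]|].
  - apply cconst.
  - apply cmult; auto. apply cmult; auto. apply cconst.
  - apply cmult; [apply cmult|]; auto. apply cconst. apply cpow; auto.
  - apply cmult; [apply cmult|]; auto. apply cpow; auto.
Qed.

Definition Y0 (z : R) := Sser (Rmin (Rmax z z0) z2).
Definition y0 := Sser z0.

Fixpoint Yit (n : nat) : R -> R :=
  match n with
  | O => Y0
  | S m => fun z => y0 + RInt (fun s => Phic s (Yit m s)) z0 z
  end.

Lemma Sser_cont : forall z, Rabs z < rho -> continuous Sser z.
Proof. intros. apply continuity_pt_filterlim. apply PSeries_continuity. apply rA; auto. Qed.

Lemma clamp_in : forall z, z0 <= Rmin (Rmax z z0) z2 <= z2.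
Proof. intros. pose proof z0_z2. unfold Rmin, Rmax; repeat destruct Rle_dec; lra. Qed.

Lemma abs_small : forall z, z0 <= z <= z2 -> Rabs z <= rho / 2.
Proof. intros. pose proof z0_pos. unfold z2 in *. rewrite Rabs_right; lra. Qed.

Lemma Y0_cont : forall z, continuous Y0 z.
Proof.
  intro z. unfold Y0. apply (continuous_comp (fun t => Rmin (Rmax t z0) z2) Sser).
  apply (cmin (fun t => Rmax t z0)). apply (cmax (fun t => t)). apply cid. apply cconst. apply cconst.
  apply Sser_cont. pose proof (abs_small _ (clamp_in z)). pose proof rho_pos. lra.
Qed.

Lemma deriv_int : forall (g : R -> R) c a z, (forall x, continuous g x) ->
  is_derive (fun b => c + RInt g a b) z (g z).
Proof.
  intros g c a z Hg.
  assert (H : is_derive (fun b => RInt g a b) z (g z)).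
  { apply (is_derive_RInt (V := R_NormedModule) g (fun b => RInt g a b) a z).
    - apply filter_forall. intro b. apply (RInt_correct (V := R_CompleteNormedModule)). apply exRIntc. auto.
    - auto. }
  apply (is_derive_ext (fun b => plus c (RInt g a b))). intro; reflexivity.
  replace (g z) with (plus 0 (g z)) by (unfold plus; simpl; ring).
  apply (is_derive_plus (K:=R_AbsRing) (V:=R_NormedModule) (fun _ => c) (fun b => RInt g a b)). apply (is_derive_const (K:=R_AbsRing) (V:=R_NormedModule)). auto.
Qed.

Lemma Yit_deriv : forall n z, continuous (Yit n) z /\ is_derive (Yit (S n)) z (Phic z (Yit n z)).
Proof.
  assert (forall n, (forall z, continuous (Yit n) z) /\ (forall z, is_derive (Yit (S n)) z (Phic z (Yit n z)))).
  { induction n.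
    - assert (C : forall z, continuous (Yit 0) z) by apply Y0_cont.
      split; auto. intro z. apply (deriv_int (fun s => Phic s (Yit 0 s))). intro; apply Phic_cont; auto.
    - destruct IHn as [C D].
      assert (C' : forall z, continuous (Yit (S n)) z).
      { intro z. apply (ex_derive_continuous (K := R_AbsRing) (V := R_NormedModule)). eexists. apply D. }
      split; auto. intro z. apply (deriv_int (fun s => Phic s (Yit (S n) s))). intro; apply Phic_cont; auto. }
  intros n z. destruct (H n); auto.
Qed.

Lemma Yit_lip : forall n s t, Rabs (Yit (S n) s - Yit (S n) t) <= Cc * Rabs (s - t).
Proof.
  intros n s t. apply (lip_of_deriv (Yit (S n)) (fun z => Phic z (Yit n z))).
  intro; apply Yit_deriv. intro; apply Phic_bound.
Qed.

Lemma Hf_small : forall z, 0 < z <= z2 -> Hf z <= 1.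
Proof. intros. pose proof rho_small. unfold z2, Hf in *. nra. Qed.

Lemma Bd_ge2 : forall z, 0 < z <= z2 -> 2 <= Bd z.
Proof.
  intros. pose proof (Hf_small z H). pose proof (Hf_pos z (proj1 H)).
  unfold Bd. assert (0 < sqrt (Hf z)) by (apply sqrt_lt_R0; auto).
  assert (sqrt (Hf z) <= 1) by (rewrite <- sqrt_1; apply sqrt_le_1_alt; auto).
  apply Rle_trans with (2 / 1). lra. unfold Rdiv. apply Rmult_le_compat_l. lra. apply Rinv_le_contravar; lra.
Qed.

Lemma Sser_ode' : forall z, 0 < z < rho -> Phi z (Sser z) = Dser z.
Proof.
  intros z Hz. pose proof (ser_ode z ltac:(rewrite Rabs_right; lra)) as E.
  pose proof (Hf_pos z (proj1 Hz)). unfold Phi. unfold Hf in *.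
  apply (Rmult_eq_reg_r (z * (z+2))); [|nz]. unfold Rdiv. rewrite Rmult_assoc, Rinv_l by nz.
  nra.
Qed.

Lemma Phic_S : forall s, z0 <= s <= z2 -> Phic s (Sser s) = Dser s.
Proof.
  intros s Hs. pose proof z0_pos. unfold Phic.
  assert (zc s = s) by (unfold zc; apply Rmax_left; lra). rewrite H0.
  pose proof (Sser_bound s (abs_small s Hs)). pose proof (Bd_ge2 s ltac:(lra)).
  rewrite clamp_id by lra. apply Sser_ode'. unfold z2 in Hs. pose proof rho_pos. lra.
Qed.

Lemma Dser_cont : forall z, Rabs z < rho -> continuous Dser z.
Proof. intros. apply continuity_pt_filterlim. apply PSeries_continuity. rewrite CV_radius_derive. apply rA; auto. Qed.

Lemma Yit_S : forall n z, z0 <= z <= z2 -> Yit n z = Sser z.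
Proof.
  induction n; intros z Hz.
  - simpl. unfold Y0. f_equal. unfold Rmin, Rmax. repeat destruct Rle_dec; lra.
  - simpl. rewrite (RInt_ext _ Dser).
    + assert (HI : is_RInt Dser z0 z (minus (Sser z) (Sser z0))).
      { apply (is_RInt_derive (V := R_CompleteNormedModule)).
        - intros x Hx. rewrite Rmin_left, Rmax_right in Hx by lra. apply is_derive_PSeries. apply rA.
          pose proof (abs_small x ltac:(lra)). pose proof rho_pos. lra.
        - intros x Hx. rewrite Rmin_left, Rmax_right in Hx by lra. apply Dser_cont.
          pose proof (abs_small x ltac:(lra)). pose proof rho_pos. lra. }
      rewrite (is_RInt_unique _ _ _ _ HI). unfold y0, minus, plus, opp; simpl. ring.
    + intros x Hx. rewrite Rmin_left, Rmax_right in Hx by lra. rewrite IHn by lra. apply Phic_S. lra.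
Qed.

Lemma exp_ge1 : forall x, 0 <= x -> 1 + x <= exp x.
Proof. intros. destruct (Req_dec x 0). subst. rewrite exp_0. lra. left. apply exp_ineq1; auto. Qed.

Definition Ew (z : R) := exp (2 * Lc * (z - z0)).
Definition Dc := Cc / (2 * Lc) + 1.

Lemma c0_pos : 0 < c0.
Proof. unfold c0. pose proof z0_pos. apply Rdiv_lt_0_compat. lra. apply Hf_pos; auto. Qed.
Lemma B0_pos : 0 < B0.
Proof. unfold B0. apply Bd_pos, z0_pos. Qed.
Lemma Lc_pos : 0 < Lc.
Proof. unfold Lc. pose proof c0_pos. pose proof B0_pos. lra. Qed.
Lemma Cc_pos : 0 <= Cc.
Proof. pose proof (Phic_bound 0 0). pose proof (Rabs_pos (Phic 0 0)). lra. Qed.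

Lemma Ew_ge1 : forall z, z0 <= z -> 1 + 2 * Lc * (z - z0) <= Ew z.
Proof. intros. unfold Ew. apply exp_ge1. pose proof Lc_pos. nra. Qed.

Lemma Yit_cont : forall n z, continuous (Yit n) z.
Proof. intros. apply Yit_deriv. Qed.

Lemma g_cont : forall n s, continuous (fun t => Phic t (Yit n t)) s.
Proof. intros. apply Phic_cont, Yit_cont. Qed.

Lemma Ew_cont : forall x, continuous Ew x.
Proof. intros x. unfold Ew. apply (continuous_comp (fun s => 2 * Lc * (s - z0)) exp).
  apply cmult. apply cconst. apply cminus. apply cid. apply cconst.
  apply continuity_pt_filterlim. apply derivable_continuous_pt, derivable_pt_exp. Qed.

Lemma int_Ew : forall z, z0 <= z -> RInt Ew z0 z = (Ew z - 1) / (2 * Lc).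
Proof.
  intros z Hz. pose proof Lc_pos.
  assert (HI : is_RInt Ew z0 z (minus (Ew z / (2*Lc)) (Ew z0 / (2*Lc)))).
  { apply (is_RInt_derive (V := R_CompleteNormedModule) (fun s => Ew s / (2 * Lc))).
    - intros x _. unfold Ew. auto_derive. auto. replace (x + - z0) with (x - z0) by ring. field. lra.
    - intros x _. apply Ew_cont. }
  rewrite (is_RInt_unique _ _ _ _ HI). unfold minus, plus, opp; simpl.
  unfold Ew. replace (2 * Lc * (z0 - z0)) with 0 by ring. rewrite exp_0. field. lra.
Qed.

Lemma diff_bound : forall n z, z0 <= z -> Rabs (Yit (S n) z - Yit n z) <= Dc * (/2)^n * Ew z.
Proof.
  pose proof Lc_pos as HL. pose proof Cc_pos as HC.
  induction n; intros z Hz.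
  - simpl Yit. 
    assert (H1 : Rabs (RInt (fun s => Phic s (Y0 s)) z0 z) <= RInt (fun _ => Cc) z0 z).
    { apply RInt_abs_bound; auto. intros; apply (g_cont 0). intros; apply cconst.
      intros; apply Phic_bound. }
    rewrite RInt_const in H1. unfold scal in H1; simpl in H1; unfold mult in H1; simpl in H1.
    assert (H2 : Rabs (y0 - Y0 z) <= 1/2).
    { unfold y0, Y0. pose proof z0_z2.
      pose proof (Sser_bound z0 (abs_small z0 ltac:(lra))).
      pose proof (Sser_bound _ (abs_small _ (clamp_in z))). apply Rabs_le; lra. }
    pose proof (Ew_ge1 z Hz).
    replace (y0 + RInt (fun s : R => Phic s (Y0 s)) z0 z - Y0 z) with 
      (RInt (fun s : R => Phic s (Y0 s)) z0 z + (y0 - Y0 z)) by ring.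
    eapply Rle_trans. apply Rabs_triang. simpl pow. rewrite Rmult_1_r.
    unfold Dc. 
    assert ((z - z0) * Cc = Cc / (2 * Lc) * (2 * Lc * (z - z0))) by (field; lra).
    assert (0 <= Cc / (2 * Lc)) by (apply Rmult_le_pos; [lra| apply Rlt_le, Rinv_0_lt_compat; lra]).
    nra.
  - change (Yit (S (S n)) z) with (y0 + RInt (fun s => Phic s (Yit (S n) s)) z0 z).
    change (Yit (S n) z) with (y0 + RInt (fun s => Phic s (Yit n s)) z0 z).
    replace (y0 + RInt (fun s : R => Phic s (Yit (S n) s)) z0 z - (y0 + RInt (fun s : R => Phic s (Yit n s)) z0 z))
      with (RInt (fun s => Phic s (Yit (S n) s) - Phic s (Yit n s)) z0 z).
    2:{ pose proof (g_cont (S n)) as G1. pose proof (g_cont n) as G0.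
        set (g1 := fun s => Phic s (Yit (S n) s)) in *. set (g0 := fun s => Phic s (Yit n s)) in *.
        pose proof (RInt_minus (V := R_CompleteNormedModule) g1 g0 z0 z) as E.
        unfold minus, plus, opp in E; simpl in E. 
        change (RInt (fun s => g1 s + - g0 s) z0 z = y0 + RInt g1 z0 z - (y0 + RInt g0 z0 z)). rewrite E. lra.
        apply exRIntc; intros; apply G1. apply exRIntc; intros; apply G0. }
    eapply Rle_trans. apply (RInt_abs_bound _ (fun s => Lc * (Dc * (/2)^n) * Ew s)); auto.
    + intros. apply cminus; apply g_cont.
    + intros. apply (cmult (fun _ => Lc * (Dc * (/2)^n)) Ew). apply cconst. apply Ew_cont.
    + intros x Hx. eapply Rle_trans. apply Phic_lip. rewrite Rmult_assoc. apply Rmult_le_compat_l. lra.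
      apply IHn. lra.
    + assert (HI : RInt (fun s => Lc * (Dc * (/2)^n) * Ew s) z0 z = Lc * (Dc * (/2)^n) * RInt Ew z0 z).
      { rewrite <- (RInt_scal (V := R_CompleteNormedModule)). reflexivity.
        apply exRIntc. intros. apply Ew_cont. }
      rewrite HI, int_Ew by auto.
      assert (0 <= Dc * (/2)^n) by (apply Rmult_le_pos; [unfold Dc; apply Rplus_le_le_0_compat; [apply Rmult_le_pos; [lra| apply Rlt_le, Rinv_0_lt_compat; lra]|lra] | apply pow_le; lra]).
      replace (Lc * (Dc * (/ 2) ^ n) * ((Ew z - 1) / (2 * Lc))) with (Dc * (/2)^n * / 2 * (Ew z - 1)) by (field; lra).
      simpl pow. pose proof (Ew_ge1 z Hz). nra.
Qed.

Lemma Dc_pos : 0 < Dc.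
Proof. unfold Dc. pose proof Lc_pos. pose proof Cc_pos.
  assert (0 <= Cc / (2 * Lc)) by (apply Rmult_le_pos; [lra| apply Rlt_le, Rinv_0_lt_compat; lra]). lra. Qed.

Lemma tele : forall z, z0 <= z -> forall n k,
  Rabs (Yit (k + n) z - Yit n z) <= 2 * Dc * (/2)^n * (1 - (/2)^k) * Ew z.
Proof.
  intros z Hz n k. induction k.
  - simpl. unfold Rminus. rewrite Rplus_opp_r, Rabs_R0. lra.
  - replace (Yit (S k + n) z - Yit n z) with ((Yit (S (k + n)) z - Yit (k+n) z) + (Yit (k + n) z - Yit n z)) by (simpl; ring).
    eapply Rle_trans. apply Rabs_triang.
    pose proof (diff_bound (k + n) z Hz). rewrite pow_add in H.
    replace (2 * Dc * (/ 2) ^ n * (1 - (/ 2) ^ S k) * Ew z) with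
      (Dc * ((/2)^k * (/2)^n) * Ew z + 2 * Dc * (/ 2) ^ n * (1 - (/ 2) ^ k) * Ew z) by (simpl; field).
    lra.
Qed.

Lemma tele' : forall z, z0 <= z -> forall n m, (n <= m)%nat ->
  Rabs (Yit m z - Yit n z) <= 2 * Dc * (/2)^n * Ew z.
Proof.
  intros z Hz n m Hnm. replace m with ((m - n) + n)%nat by lia.
  eapply Rle_trans. apply tele; auto. 
  pose proof Dc_pos. assert (0 < (/2)^n) by (apply pow_lt; lra). assert (0 < (/2)^(m-n)) by (apply pow_lt; lra).
  assert (0 < Ew z) by (unfold Ew; apply exp_pos). 
  assert (0 < 2 * Dc * (/2)^n * Ew z) by (repeat apply Rmult_lt_0_compat; lra).
  replace (2 * Dc * (/ 2) ^ n * (1 - (/ 2) ^ (m - n)) * Ew z) with (2 * Dc * (/ 2) ^ n * Ew z * (1 - (/ 2) ^ (m - n))) by ring.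
  nra.
Qed.

Definition Yl (z : R) : R := real (Lim_seq (fun n => Yit n (Rmax z z0))).

Lemma Yl_lim : forall z, is_lim_seq (fun n => Yit n (Rmax z z0)) (Yl z).
Proof.
  intro z. set (w := Rmax z z0). assert (Hw : z0 <= w) by apply Rmax_r.
  assert (Hc : ex_finite_lim_seq (fun n => Yit n w)).
  { apply ex_lim_seq_cauchy_corr. intro eps.
    assert (Hl : is_lim_seq (fun n => 4 * Dc * Ew w * (/2)^n) 0).
    { replace (Finite 0) with (Rbar_mult (4 * Dc * Ew w) 0) by (simpl; f_equal; ring).
      apply is_lim_seq_scal_l. apply is_lim_seq_geom. rewrite Rabs_right; lra. }
    apply is_lim_seq_spec in Hl. destruct (Hl eps) as [N HN].
    exists N. intros n m Hn Hm.
    pose proof (tele' w Hw N n Hn). pose proof (tele' w Hw N m Hm).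
    specialize (HN N (le_n N)). rewrite Rminus_0_r in HN.
    eapply Rle_lt_trans. 2: apply HN.
    replace (Yit n w - Yit m w) with ((Yit n w - Yit N w) - (Yit m w - Yit N w)) by ring.
    eapply Rle_trans. apply Rabs_triang. rewrite Rabs_Ropp.
    eapply Rle_trans. apply Rplus_le_compat; eauto.
    rewrite Rabs_right. right; ring. 
    pose proof Dc_pos. assert (0 < (/2)^N) by (apply pow_lt; lra). assert (0 < Ew w) by (unfold Ew; apply exp_pos).
    apply Rle_ge. repeat apply Rmult_le_pos; lra. }
  unfold Yl. fold w. pose proof (Lim_seq_correct' _ Hc) as Hl.
  apply ex_finite_lim_seq_correct in Hc. destruct Hc as [_ Hf].
  exact Hl.
Qed.

Lemma Rmax_z : forall z, z0 <= z -> Rmax z z0 = z.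
Proof. intros. apply Rmax_left. auto. Qed.

Lemma lim_le : forall (u : nat -> R) (l B : R), is_lim_seq u l -> (forall n, u n <= B) -> l <= B.
Proof.
  intros u l B Hu Hb. assert (Rbar_le l B).
  { apply is_lim_seq_le with (u := u) (v := fun _ => B) (l1 := l) (l2 := B); [exact Hb | exact Hu | apply is_lim_seq_const]. }
  simpl in H. exact H.
Qed.

Lemma Yl_bound : forall z, z0 <= z -> forall n, Rabs (Yl z - Yit n z) <= 2 * Dc * (/2)^n * Ew z.
Proof.
  intros z Hz n. pose proof (Yl_lim z) as Hl. rewrite Rmax_z in Hl by auto.
  apply (is_lim_seq_incr_n _ n) in Hl.
  assert (H2 : is_lim_seq (fun k => Rabs (Yit (k + n) z - Yit n z)) (Rabs (Yl z - Yit n z))).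
  { apply (is_lim_seq_abs _ (Yl z - Yit n z)). apply is_lim_seq_minus'; auto. apply is_lim_seq_const. }
  apply (lim_le _ _ _ H2). intro k. apply tele'; auto. lia.
Qed.

Lemma Yl_lip : forall s t, Rabs (Yl s - Yl t) <= Cc * Rabs (s - t).
Proof.
  intros s t.
  assert (Hs : is_lim_seq (fun n => Yit (S n) (Rmax s z0)) (Yl s)).
  { pose proof (Yl_lim s). apply (is_lim_seq_incr_n _ 1) in H. eapply is_lim_seq_ext; [|apply H]. intro; simpl. rewrite Nat.add_1_r; reflexivity. }
  assert (Ht : is_lim_seq (fun n => Yit (S n) (Rmax t z0)) (Yl t)).
  { pose proof (Yl_lim t). apply (is_lim_seq_incr_n _ 1) in H. eapply is_lim_seq_ext; [|apply H]. intro; simpl. rewrite Nat.add_1_r; reflexivity. }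
  assert (H2 : is_lim_seq (fun n => Rabs (Yit (S n) (Rmax s z0) - Yit (S n) (Rmax t z0))) (Rabs (Yl s - Yl t))).
  { apply (is_lim_seq_abs _ (Yl s - Yl t)). apply is_lim_seq_minus'; auto. }
  apply (lim_le _ _ _ H2). intro n. eapply Rle_trans. apply Yit_lip.
  apply Rmult_le_compat_l. apply Cc_pos. 
  unfold Rmax; repeat destruct Rle_dec; unfold Rabs; repeat destruct Rcase_abs; lra.
Qed.

Lemma Yl_cont : forall z, continuous Yl z.
Proof.
  intro z. apply continuity_pt_filterlim. unfold continuity_pt, continue_in, limit1_in, limit_in.
  intros eps Heps. pose proof Cc_pos.
  exists (eps / (Cc + 1)). split. apply Rdiv_lt_0_compat; lra.
  intros x [_ Hx]. simpl in *. unfold R_dist in *. eapply Rle_lt_trans. apply Yl_lip.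
  apply Rle_lt_trans with (Cc * (eps / (Cc + 1))). apply Rmult_le_compat_l; lra.
  replace (Cc * (eps / (Cc + 1))) with (eps * (Cc / (Cc + 1))) by (field; lra).
  rewrite <- (Rmult_1_r eps) at 2. apply Rmult_lt_compat_l; auto.
  apply Rmult_lt_reg_r with (Cc + 1). lra. unfold Rdiv. rewrite Rmult_assoc, Rinv_l by lra. lra.
Qed.

Lemma Yl_S : forall z, z0 <= z <= z2 -> Yl z = Sser z.
Proof.
  intros z Hz. pose proof (Yl_lim z) as Hl. rewrite Rmax_z in Hl by lra.
  eapply is_lim_seq_ext in Hl. 2: intro n; apply Yit_S; auto.
  apply is_lim_seq_unique in Hl. rewrite Lim_seq_const in Hl. injection Hl. auto.
Qed.

Lemma gl_cont : forall s, continuous (fun t => Phic t (Yl t)) s.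
Proof. intros. apply Phic_cont, Yl_cont. Qed.

Lemma Ew_mono : forall x z, x <= z -> Ew x <= Ew z.
Proof. intros. unfold Ew. destruct (Req_dec x z). subst; lra. left. apply exp_increasing. pose proof Lc_pos. nra. Qed.

Lemma Yl_int : forall z, z0 <= z -> Yl z = y0 + RInt (fun s => Phic s (Yl s)) z0 z.
Proof.
  intros z Hz. pose proof Lc_pos. pose proof Dc_pos.
  assert (HE : 0 < Ew z) by (unfold Ew; apply exp_pos).
  cut (Yl z - y0 - RInt (fun s => Phic s (Yl s)) z0 z = 0). lra.
  apply (geom_zero _ (2 * Dc * Ew z * (1 + Lc * (z - z0)))). intro n.
  pose proof (g_cont n) as G1. pose proof gl_cont as G0.
  set (g1 := fun s => Phic s (Yit n s)) in *. set (g0 := fun s => Phic s (Yl s)) in *.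
  assert (E1 : Yit (S n) z = y0 + RInt g1 z0 z) by reflexivity.
  assert (E2 : RInt g1 z0 z - RInt g0 z0 z = RInt (fun s => g1 s + - g0 s) z0 z).
  { pose proof (RInt_minus (V := R_CompleteNormedModule) g1 g0 z0 z) as E.
    unfold minus, plus, opp in E; simpl in E. rewrite E. lra.
    apply exRIntc; intros; apply G1. apply exRIntc; intros; apply G0. }
  replace (Yl z - y0 - RInt g0 z0 z) with ((Yl z - Yit (S n) z) + (RInt g1 z0 z - RInt g0 z0 z)) by (rewrite E1; ring).
  rewrite E2. eapply Rle_trans. apply Rabs_triang.
  assert (B1 : Rabs (Yl z - Yit (S n) z) <= 2 * Dc * (/2)^n * Ew z).
  { eapply Rle_trans. apply Yl_bound; auto. simpl pow.
    assert (0 < (/2)^n) by (apply pow_lt; lra). 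
    assert (0 < Dc * (/2)^n * Ew z) by (repeat apply Rmult_lt_0_compat; lra).
    replace (2 * Dc * (/ 2 * (/ 2) ^ n) * Ew z) with (Dc * (/2)^n * Ew z) by field.
    lra. }
  assert (B2 : Rabs (RInt (fun s => g1 s + - g0 s) z0 z) <= RInt (fun _ => Lc * (2 * Dc * (/2)^n * Ew z)) z0 z).
  { apply RInt_abs_bound; auto.
    - intros. apply cplus; auto. apply copp; auto.
    - intros. apply cconst.
    - intros x Hx. 
      replace (Rabs (g1 x + - g0 x)) with (Rabs (Phic x (Yl x) - Phic x (Yit n x))) by (unfold g1, g0; rewrite <- Rabs_Ropp; f_equal; ring).
      eapply Rle_trans. apply Phic_lip. apply Rmult_le_compat_l. lra.
      eapply Rle_trans. apply Yl_bound. lra. 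
      apply Rmult_le_compat_l. assert (0 < (/2)^n) by (apply pow_lt; lra). nra.
      apply Ew_mono. lra. }
  rewrite RInt_const in B2. unfold scal in B2; simpl in B2; unfold mult in B2; simpl in B2.
  assert (0 < (/2)^n) by (apply pow_lt; lra).
  assert (0 <= z - z0) by lra.
  replace (2 * Dc * Ew z * (1 + Lc * (z - z0)) * (/ 2) ^ n) with
    (2 * Dc * (/ 2) ^ n * Ew z + (z - z0) * (Lc * (2 * Dc * (/ 2) ^ n * Ew z))) by ring.
  lra.
Qed.

Lemma Yl_deriv : forall z, z0 < z -> is_derive Yl z (Phic z (Yl z)).
Proof.
  intros z Hz.
  assert (H : is_derive (fun b => Yl b - y0) z (Phic z (Yl z))).
  { apply (is_derive_RInt (V := R_NormedModule) (fun s => Phic s (Yl s)) (fun b => Yl b - y0) z0 z).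
    - exists (mkposreal (z - z0) ltac:(lra)). intros b Hb. 
      assert (z0 <= b). { unfold ball in Hb; simpl in Hb; unfold AbsRing_ball, abs, minus, plus, opp in Hb; simpl in Hb.
        apply Rabs_def2 in Hb. lra. }
      rewrite (Yl_int b) by auto. 
      assert (E : forall r : R, y0 + r - y0 = r) by (intro; ring). rewrite E.
      apply (RInt_correct (V := R_CompleteNormedModule)). apply exRIntc. intros; apply gl_cont.
    - apply gl_cont. }
  apply (is_derive_ext (fun b => (Yl b - y0) + y0)). intro t; change (Yl t - y0 + y0 = Yl t); ring.
  replace (Phic z (Yl z)) with (plus (Phic z (Yl z)) 0) by (unfold plus; simpl; ring).
  apply (is_derive_plus (K:=R_AbsRing) (V:=R_NormedModule) (fun b => Yl b - y0) (fun _ => y0)). auto.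
  apply (is_derive_const (K:=R_AbsRing) (V:=R_NormedModule)).
Qed.

Lemma Yl_z0 : Yl z0 = y0.
Proof. rewrite Yl_S. reflexivity. pose proof z0_z2. lra. Qed.

Lemma y0_range : 3/4 <= y0 <= 5/4.
Proof. unfold y0. apply Sser_bound. apply abs_small. pose proof z0_z2. lra. Qed.

Lemma Yl_nonneg : forall z, z0 <= z -> 0 <= Yl z.
Proof.
  intros z Hz. apply (barrier Yl (fun t => Phic t (Yl t)) z0 z Hz).
  - intros; apply Yl_cont.
  - intros; apply Yl_deriv; lra.
  - intros t Ht Hneg. pose proof z0_pos.
    unfold Phic. assert (zc t = t) by (unfold zc; apply Rmax_left; lra). rewrite H0.
    assert (clampY t (Yl t) = 0). { unfold clampY. pose proof (Bd_pos t ltac:(lra)). unfold Rmax, Rmin. repeat destruct Rle_dec; lra. }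
    rewrite H1. unfold Phi. pose proof (Hf_pos t ltac:(lra)).
    replace ((2 - 2 * (t + 1) * 0 + 2 * Hf t * 0 ^ 2 - (t + 1) * Hf t * 0 ^ 3) / Hf t) with (2 / Hf t) by (field; lra).
    apply Rlt_le, Rdiv_lt_0_compat; lra.
  - rewrite Yl_z0. pose proof y0_range. lra.
Qed.


Definition dBd (t : R) := - 2 * (t + 1) / (Hf t * sqrt (Hf t)).

Lemma Bd_deriv : forall t, 0 < t -> is_derive Bd t (dBd t).
Proof.
  intros t Ht. pose proof (Hf_pos t Ht). unfold Bd, dBd, Hf in *.
  assert (0 < sqrt (t * (t + 2))) by (apply sqrt_lt_R0; auto).
  auto_derive. repeat split; auto; lra.
  assert (E : sqrt (t * (t+2)) * sqrt (t * (t+2)) = t * (t+2)) by (apply sqrt_sqrt; lra).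
  set (s := sqrt (t * (t+2))) in *. rewrite <- E. field. lra.
Qed.

Lemma Bd_cont : forall t, 0 < t -> continuous Bd t.
Proof. intros. apply (ex_derive_continuous (K:=R_AbsRing) (V:=R_NormedModule)). eexists. apply Bd_deriv; auto. Qed.

Lemma Yl_le_Bd : forall z, z0 <= z -> Yl z <= Bd z.
Proof.
  intros z Hz. pose proof z0_pos.
  cut (0 <= Bd z - Yl z). lra.
  apply (barrier (fun t => Bd t - Yl t) (fun t => dBd t - Phic t (Yl t)) z0 z Hz).
  - intros t Ht. apply cminus. apply Bd_cont; lra. apply Yl_cont.
  - intros t Ht. apply (is_derive_minus (K:=R_AbsRing) (V:=R_NormedModule) Bd Yl). apply Bd_deriv; lra. apply Yl_deriv; lra.
  - intros t Ht Hneg. 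
    unfold Phic. assert (zc t = t) by (unfold zc; apply Rmax_left; lra). rewrite H0.
    assert (clampY t (Yl t) = Bd t). { unfold clampY. pose proof (Bd_pos t ltac:(lra)). unfold Rmax, Rmin. repeat destruct Rle_dec; lra. }
    rewrite H1. pose proof (Hf_pos t ltac:(lra)) as Hh.
    assert (Hs : 0 < sqrt (Hf t)) by (apply sqrt_lt_R0; auto).
    assert (E : sqrt (Hf t) * sqrt (Hf t) = Hf t) by (apply sqrt_sqrt; lra).
    unfold dBd, Phi, Bd. set (s := sqrt (Hf t)) in *. rewrite <- E.
    replace (-2 * (t + 1) / (s * s * s) - (2 - 2 * (t + 1) * (2 / s) + 2 * (s * s) * (2 / s) ^ 2 - (t + 1) * (s * s) * (2 / s) ^ 3) / (s * s))
      with (10 * (t + 1 - s) / (s * s * s)) by (field; lra).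
    assert (s < t + 1). { unfold Hf in E. nra. }
    apply Rlt_le, Rdiv_lt_0_compat. lra. repeat apply Rmult_lt_0_compat; lra.
  - rewrite Yl_z0. pose proof y0_range. pose proof (Bd_ge2 z0 ltac:(pose proof z0_z2; lra)). lra.
Qed.

Inductive ex1 : Type :=
| eC (c : R) | eZ | eV | eIH | ePl (a b : ex1) | eMu (a b : ex1).

Fixpoint ev1 (e : ex1) (z y : R) : R :=
  match e with
  | eC c => c | eZ => z | eV => y | eIH => / Hf z
  | ePl a b => ev1 a z y + ev1 b z y
  | eMu a b => ev1 a z y * ev1 b z y
  end.

Fixpoint dZ (e : ex1) : ex1 :=
  match e with
  | eC _ => eC 0 | eZ => eC 1 | eV => eC 0
  | eIH => eMu (eMu (eC (-1)) (ePl (eMu (eC 2) eZ) (eC 2))) (eMu eIH eIH)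
  | ePl a b => ePl (dZ a) (dZ b)
  | eMu a b => ePl (eMu (dZ a) b) (eMu a (dZ b))
  end.

Fixpoint dV (e : ex1) : ex1 :=
  match e with
  | eC _ => eC 0 | eZ => eC 0 | eV => eC 1 | eIH => eC 0
  | ePl a b => ePl (dV a) (dV b)
  | eMu a b => ePl (eMu (dV a) b) (eMu a (dV b))
  end.

Definition ePhi : ex1 :=
  ePl (ePl (ePl (eMu (eC 2) eIH) (eMu (eMu (eMu (eC (-2)) (ePl eZ (eC 1))) eV) eIH))
           (eMu (eC 2) (eMu eV eV)))
      (eMu (eMu (eC (-1)) (ePl eZ (eC 1))) (eMu eV (eMu eV eV))).

Lemma ePhi_ok : forall z y, 0 < z -> ev1 ePhi z y = Phi z y.
Proof. intros. pose proof (Hf_pos z H). unfold Phi. simpl. field. lra. Qed.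

Definition Dt (e : ex1) : ex1 := ePl (dZ e) (eMu (dV e) ePhi).

Lemma ev1_deriv : forall (Y : R -> R) z, 0 < z -> is_derive Y z (Phi z (Y z)) ->
  forall e, is_derive (fun t => ev1 e t (Y t)) z (ev1 (Dt e) z (Y z)).
Proof.
  intros Y z Hz HY e. 
  replace (ev1 (Dt e) z (Y z)) with (ev1 (dZ e) z (Y z) + ev1 (dV e) z (Y z) * Phi z (Y z))
    by (unfold Dt; cbn [ev1]; rewrite ePhi_ok; auto).
  induction e; cbn [dZ dV ev1].
  - apply (is_derive_ext (fun _ => c)). auto. 
    replace (0 + 0 * Phi z (Y z)) with (@zero R_NormedModule) by (unfold zero; simpl; ring).
    apply (is_derive_const (K:=R_AbsRing) (V:=R_NormedModule)).
  - replace (1 + 0 * Phi z (Y z)) with (@one R_AbsRing) by (unfold one; simpl; ring).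
    apply (is_derive_id (K:=R_AbsRing)).
  - replace (0 + 1 * Phi z (Y z)) with (Phi z (Y z)) by ring. auto.
  - pose proof (Hf_pos z Hz).
    assert (is_derive (fun t => / Hf t) z (-1 * (2 * z + 2) * (/ Hf z * / Hf z))).
    { unfold Hf in *. auto_derive. lra. field. lra. }
    replace (-1 * (2 * z + 2) * (/ Hf z * / Hf z) + 0 * Phi z (Y z)) with (-1 * (2 * z + 2) * (/ Hf z * / Hf z)) by ring.
    auto.
  - replace ((ev1 (dZ e1) z (Y z) + ev1 (dZ e2) z (Y z)) + (ev1 (dV e1) z (Y z) + ev1 (dV e2) z (Y z)) * Phi z (Y z))
      with (plus (ev1 (dZ e1) z (Y z) + ev1 (dV e1) z (Y z) * Phi z (Y z)) (ev1 (dZ e2) z (Y z) + ev1 (dV e2) z (Y z) * Phi z (Y z)))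
      by (unfold plus; simpl; ring).
    apply (is_derive_plus (K:=R_AbsRing) (V:=R_NormedModule) (fun t => ev1 e1 t (Y t)) (fun t => ev1 e2 t (Y t))); auto.
  - set (A1 := ev1 e1 z (Y z)) in *. set (A2 := ev1 e2 z (Y z)) in *.
    set (D1 := ev1 (dZ e1) z (Y z) + ev1 (dV e1) z (Y z) * Phi z (Y z)) in *.
    set (D2 := ev1 (dZ e2) z (Y z) + ev1 (dV e2) z (Y z) * Phi z (Y z)) in *.
    replace ((ev1 (dZ e1) z (Y z) * A2 + A1 * ev1 (dZ e2) z (Y z)) + (ev1 (dV e1) z (Y z) * A2 + A1 * ev1 (dV e2) z (Y z)) * Phi z (Y z))
      with (D1 * A2 + A1 * D2) by (unfold D1, D2; ring).
    apply (is_derive_mult (fun t => ev1 e1 t (Y t)) (fun t => ev1 e2 t (Y t))); auto.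
    intros; apply Rmult_comm.
Qed.

Lemma loc_gt : forall a z, a < z -> locally z (fun t => a < t).
Proof.
  intros a z H. exists (mkposreal (z - a) ltac:(lra)). intros t Ht.
  unfold ball in Ht; simpl in Ht; unfold AbsRing_ball, abs, minus, plus, opp in Ht; simpl in Ht.
  apply Rabs_def2 in Ht. lra.
Qed.
Lemma loc_lt : forall a z, z < a -> locally z (fun t => t < a).
Proof.
  intros a z H. exists (mkposreal (a - z) ltac:(lra)). intros t Ht.
  unfold ball in Ht; simpl in Ht; unfold AbsRing_ball, abs, minus, plus, opp in Ht; simpl in Ht.
  apply Rabs_def2 in Ht. lra.
Qed.

Lemma Yl_ode : forall z, z0 < z -> is_derive Yl z (Phi z (Yl z)).
Proof.
  intros z Hz. pose proof (Yl_deriv z Hz). unfold Phic in H.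
  assert (zc z = z) by (unfold zc; apply Rmax_left; lra). rewrite H0 in H.
  rewrite clamp_id in H; auto. split. apply Yl_nonneg; lra. apply Yl_le_Bd; lra.
Qed.

Fixpoint itD (k : nat) : ex1 := match k with O => eV | S k => Dt (itD k) end.

Lemma Yl_Dn : forall k z, z0 < z -> Derive_n Yl k z = ev1 (itD k) z (Yl z).
Proof.
  induction k; intros z Hz. reflexivity.
  simpl Derive_n. rewrite (Derive_ext_loc _ (fun t => ev1 (itD k) t (Yl t))).
  - apply is_derive_unique. simpl itD. apply ev1_deriv. pose proof z0_pos; lra. apply Yl_ode; auto.
  - apply (filter_imp (fun t => z0 < t)). intros; apply IHk; auto. apply loc_gt; auto.
Qed.

Lemma Yl_smooth : forall k z, z0 < z -> ex_derive (Derive_n Yl k) z.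
Proof.
  intros k z Hz. apply (ex_derive_ext_loc (fun t => ev1 (itD k) t (Yl t))).
  - apply (filter_imp (fun t => z0 < t)). intros; symmetry; apply Yl_Dn; auto. apply loc_gt; auto.
  - eexists. apply ev1_deriv. pose proof z0_pos; lra. apply Yl_ode; auto.
Qed.

Lemma Sser_smooth : forall k z, Rabs z < rho -> ex_derive (Derive_n Sser k) z.
Proof. intros. apply (ex_derive_n_PSeries (S k)). apply rA; auto. Qed.

Definition Psol (z : R) : R := if Rlt_dec z z2 then Sser z else Yl z.

Lemma Psol_S : forall z, z < z2 -> Psol z = Sser z.
Proof. intros. unfold Psol. destruct Rlt_dec; auto. lra. Qed.
Lemma Psol_Y : forall z, z0 <= z -> Psol z = Yl z.
Proof. intros. unfold Psol. destruct Rlt_dec; auto. rewrite Yl_S; auto. lra. Qed.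

Lemma Psol_smooth : forall k z, - rho < z -> ex_derive (Derive_n Psol k) z.
Proof.
  intros k z Hz. pose proof z0_z2. pose proof z0_pos.
  destruct (Rlt_dec z z2).
  - apply (ex_derive_ext_loc (Derive_n Sser k)).
    + apply (filter_imp (fun t => - rho < t /\ t < z2)).
      * intros t [Ht1 Ht2]. apply Derive_n_ext_loc. 
        apply (filter_imp (fun s => s < z2)). intros; symmetry; apply Psol_S; auto. apply loc_lt; auto.
      * apply filter_and. apply loc_gt; auto. apply loc_lt; auto.
    + apply Sser_smooth. unfold z2 in r. pose proof rho_pos. apply Rabs_def1; lra.
  - apply (ex_derive_ext_loc (Derive_n Yl k)).
    + apply (filter_imp (fun t => z0 < t)).
      * intros t Ht. apply Derive_n_ext_loc. 
        apply (filter_imp (fun s => z0 < s)). intros; symmetry; apply Psol_Y; lra. apply loc_gt; auto.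
      * apply loc_gt; lra.
    + apply Yl_smooth. lra.
Qed.

Lemma Psol_ode : forall z, 0 <= z ->
  Hf z * Derive Psol z + (z + 1) * Psol z = (1 + Hf z * (Psol z)^2) * (2 - (z + 1) * Psol z).
Proof.
  intros z Hz. pose proof z0_z2. pose proof z0_pos. pose proof rho_pos.
  destruct (Rlt_dec z z2).
  - rewrite (Derive_ext_loc _ Sser).
    2:{ apply (filter_imp (fun s => s < z2)). intros; apply Psol_S; auto. apply loc_lt; auto. }
    unfold Sser at 1. rewrite Derive_PSeries. 2:{ apply rA. unfold z2 in r. rewrite Rabs_right; lra. }
    rewrite Psol_S by auto. pose proof (ser_ode z ltac:(unfold z2 in r; rewrite Rabs_right; lra)).
    unfold Sser, Dser in *. unfold Hf. nra.
  - rewrite (Derive_ext_loc _ Yl).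
    2:{ apply (filter_imp (fun s => z0 < s)). intros; apply Psol_Y; lra. apply loc_gt; lra. }
    rewrite (is_derive_unique _ _ _ (Yl_ode z ltac:(lra))).
    rewrite Psol_Y by lra. pose proof (Hf_pos z ltac:(lra)). unfold Phi. field. lra.
Qed.

Definition Fsol (z : R) : R := RInt Psol 0 z.

Lemma Psol_cont : forall z, - rho < z -> continuous Psol z.
Proof. intros. apply (ex_derive_continuous (K:=R_AbsRing) (V:=R_NormedModule)). apply (Psol_smooth 0). auto. Qed.

Lemma Fsol_deriv : forall z, - rho < z -> is_derive Fsol z (Psol z).
Proof.
  intros z Hz. pose proof rho_pos.
  apply (is_derive_RInt (V := R_NormedModule) Psol Fsol 0 z).
  - apply (filter_imp (fun b => - rho < b)). intros b Hb. apply (RInt_correct (V := R_CompleteNormedModule)).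
    apply exRIntc. intros t Ht. apply Psol_cont. 
    assert (- rho < Rmin 0 b) by (unfold Rmin; destruct Rle_dec; lra). lra.
    apply loc_gt; auto.
  - apply Psol_cont; auto.
Qed.

Lemma Fsol_Dn : forall k z, - rho < z -> Derive_n Fsol (S k) z = Derive_n Psol k z.
Proof.
  intros k z Hz. replace (S k) with (k + 1)%nat by lia. rewrite <- (Derive_n_comp Fsol k 1). 
  apply Derive_n_ext_loc. apply (filter_imp (fun b => - rho < b)). 2: apply loc_gt; auto.
  intros b Hb. simpl. apply is_derive_unique. apply Fsol_deriv; auto.
Qed.

Lemma Fsol_smooth : forall k z, - rho < z -> ex_derive (Derive_n Fsol k) z.
Proof.
  intros k z Hz. destruct k.
  - eexists. apply Fsol_deriv; auto.
  - apply (ex_derive_ext_loc (Derive_n Psol k)).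
    + apply (filter_imp (fun b => - rho < b)). intros; symmetry; apply Fsol_Dn; auto. apply loc_gt; auto.
    + apply Psol_smooth; auto.
Qed.

Lemma Fsol_Dn_deriv : forall k z, - rho < z -> is_derive (Derive_n Fsol k) z (Derive_n Fsol (S k) z).
Proof. intros. simpl. apply Derive_correct. apply Fsol_smooth; auto. Qed.

Definition qf (x y : R) : R := (x^2 + (y-1)^2) / (2*y).

Lemma qf_nonneg : forall x y, 0 < y -> 0 <= qf x y.
Proof. intros. unfold qf. apply Rmult_le_pos. apply Rplus_le_le_0_compat; apply pow2_ge_0. apply Rlt_le, Rinv_0_lt_compat. lra. Qed.

Inductive ex2 : Type :=
| fC (c : R) | fX | fY | fIY | fF (k : nat) | fPl (a b : ex2) | fMu (a b : ex2).

Fixpoint ev2 (e : ex2) (x y : R) : R :=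
  match e with
  | fC c => c | fX => x | fY => y | fIY => / y
  | fF k => Derive_n Fsol k (qf x y)
  | fPl a b => ev2 a x y + ev2 b x y
  | fMu a b => ev2 a x y * ev2 b x y
  end.

Definition fqx : ex2 := fMu fX fIY.
Definition fqy : ex2 := fPl (fC (1/2)) (fMu (fMu (fC (-1/2)) (fPl (fMu fX fX) (fC 1))) (fMu fIY fIY)).

Fixpoint dX (e : ex2) : ex2 :=
  match e with
  | fC _ => fC 0 | fX => fC 1 | fY => fC 0 | fIY => fC 0
  | fF k => fMu (fF (S k)) fqx
  | fPl a b => fPl (dX a) (dX b)
  | fMu a b => fPl (fMu (dX a) b) (fMu a (dX b))
  end.

Fixpoint dY (e : ex2) : ex2 :=
  match e with
  | fC _ => fC 0 | fX => fC 0 | fY => fC 1 | fIY => fMu (fC (-1)) (fMu fIY fIY)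
  | fF k => fMu (fF (S k)) fqy
  | fPl a b => fPl (dY a) (dY b)
  | fMu a b => fPl (fMu (dY a) b) (fMu a (dY b))
  end.

Lemma qf_dx : forall x y, 0 < y -> is_derive (fun t => qf t y) x (ev2 fqx x y).
Proof. intros. unfold qf, fqx. simpl. auto_derive. lra. field. lra. Qed.
Lemma qf_dy : forall x y, 0 < y -> is_derive (fun t => qf x t) y (ev2 fqy x y).
Proof. intros. unfold qf, fqy. simpl. auto_derive. lra. field. lra. Qed.

Lemma ev2_dx : forall e x y, 0 < y -> is_derive (fun t => ev2 e t y) x (ev2 (dX e) x y).
Proof.
  intros e x y Hy. pose proof rho_pos. induction e; cbn [dX ev2].
  - apply (is_derive_const (K:=R_AbsRing) (V:=R_NormedModule)).
  - apply (is_derive_id (K:=R_AbsRing)).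
  - apply (is_derive_const (K:=R_AbsRing) (V:=R_NormedModule)).
  - apply (is_derive_const (K:=R_AbsRing) (V:=R_NormedModule)).
  - rewrite Rmult_comm. apply (is_derive_comp (Derive_n Fsol k) (fun t => qf t y)).
    apply Fsol_Dn_deriv. pose proof (qf_nonneg x y Hy); lra. apply qf_dx; auto.
  - apply (is_derive_plus (K:=R_AbsRing) (V:=R_NormedModule) (fun t => ev2 e1 t y) (fun t => ev2 e2 t y)); auto.
  - apply (is_derive_mult (fun t => ev2 e1 t y) (fun t => ev2 e2 t y)); auto. intros; apply Rmult_comm.
Qed.

Lemma ev2_dy : forall e x y, 0 < y -> is_derive (fun t => ev2 e x t) y (ev2 (dY e) x y).
Proof.
  intros e x y Hy. pose proof rho_pos. induction e; cbn [dY ev2].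
  - apply (is_derive_const (K:=R_AbsRing) (V:=R_NormedModule)).
  - apply (is_derive_const (K:=R_AbsRing) (V:=R_NormedModule)).
  - apply (is_derive_id (K:=R_AbsRing)).
  - auto_derive. lra. field. lra.
  - rewrite Rmult_comm. apply (is_derive_comp (Derive_n Fsol k) (fun t => qf x t)).
    apply Fsol_Dn_deriv. pose proof (qf_nonneg x y Hy); lra. apply qf_dy; auto.
  - apply (is_derive_plus (K:=R_AbsRing) (V:=R_NormedModule) (fun t => ev2 e1 x t) (fun t => ev2 e2 x t)); auto.
  - apply (is_derive_mult (fun t => ev2 e1 x t) (fun t => ev2 e2 x t)); auto. intros; apply Rmult_comm.
Qed.


Lemma cfst (x y : R) : continuous (fun p : R * R => fst p) (x, y).
Proof. apply continuous_fst. Qed.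
Lemma csnd (x y : R) : continuous (fun p : R * R => snd p) (x, y).
Proof. apply continuous_snd. Qed.

Lemma qf_cont2 : forall x y, 0 < y -> continuous (fun p : R * R => qf (fst p) (snd p)) (x, y).
Proof.
  intros x y Hy. unfold qf. apply cdiv.
  - apply cplus; apply cpow. apply cfst. apply cminus. apply csnd. apply cconst.
  - apply cmult. apply cconst. apply csnd.
  - simpl. lra.
Qed.

Lemma ev2_cont : forall e x y, 0 < y -> continuous (fun p : R * R => ev2 e (fst p) (snd p)) (x, y).
Proof.
  intros e x y Hy. pose proof rho_pos. induction e; cbn [ev2].
  - apply cconst.
  - apply cfst.
  - apply csnd.
  - apply cinv. apply csnd. simpl; lra.
  - apply (continuous_comp (fun p : R * R => qf (fst p) (snd p)) (Derive_n Fsol k)).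
    apply qf_cont2; auto. simpl.
    apply (ex_derive_continuous (K:=R_AbsRing) (V:=R_NormedModule)). apply Fsol_smooth.
    pose proof (qf_nonneg x y Hy). lra.
  - apply cplus; auto.
  - apply cmult; auto.
Qed.

Definition usol (x y : R) : R := Fsol (qf x y).

Fixpoint dw (w : list bool) : ex2 :=
  match w with nil => fF 0 | cons b w' => if b then dY (dw w') else dX (dw w') end.

Lemma loc_pos_y : forall y, 0 < y -> locally y (fun t => 0 < t).
Proof. intros. apply loc_gt; auto. Qed.

Lemma iter_ev2 : forall w x y, 0 < y -> iter_partial w usol x y = ev2 (dw w) x y.
Proof.
  induction w; intros x y Hy.
  - reflexivity.
  - simpl. destruct a.
    + unfold partial_y. rewrite (Derive_ext_loc _ (fun t => ev2 (dw w) x t)).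
      * apply is_derive_unique. apply ev2_dy; auto.
      * apply (filter_imp (fun t => 0 < t)). intros; apply IHw; auto. apply loc_pos_y; auto.
    + unfold partial_x. rewrite (Derive_ext _ (fun t => ev2 (dw w) t y)).
      * apply is_derive_unique. apply ev2_dx; auto.
      * intros; apply IHw; auto.
Qed.

Lemma loc2 : forall x y, 0 < y -> locally (x, y) (fun p : R * R => 0 < snd p).
Proof.
  intros x y Hy. exists (mkposreal y Hy). intros [a b] [_ Hb]. simpl in *.
  unfold ball in Hb; simpl in Hb; unfold AbsRing_ball, abs, minus, plus, opp in Hb; simpl in Hb.
  apply Rabs_def2 in Hb. lra.
Qed.

Lemma usol_smooth : smooth_on_H2 usol.
Proof.
  intros w x y Hy. unfold in_H2 in Hy. split; [|split].
  - apply (ex_derive_ext (fun t => ev2 (dw w) t y)). intros; symmetry; apply iter_ev2; auto.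
    eexists. apply ev2_dx; auto.
  - apply (ex_derive_ext_loc (fun t => ev2 (dw w) x t)).
    apply (filter_imp (fun t => 0 < t)). intros; symmetry; apply iter_ev2; auto. apply loc_pos_y; auto.
    eexists. apply ev2_dy; auto.
  - apply (continuous_ext_loc (fun p : R * R => iter_partial w usol (fst p) (snd p)) (fun p : R * R => ev2 (dw w) (fst p) (snd p))).
    apply (filter_imp (fun p : R * R => 0 < snd p)). intros; symmetry; apply iter_ev2; auto. apply loc2; auto.
    apply ev2_cont; auto.
Qed.

Lemma rot_q : forall a b c d, is_rotation_about 0 1 a b c d -> forall x y, 0 < y ->
  qf (mobius_x a b c d x y) (mobius_y a b c d x y) = qf x y.
Proof.
  intros a b c d [H1 [H2 H3]] x y Hy. unfold mobius_x, mobius_y in *.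
  replace ((c * 0 + d) ^ 2 + (c * 1) ^ 2) with (c^2 + d^2) in H2, H3 by ring.
  assert (HN : c^2 + d^2 <> 0). { intro E. rewrite E in H3. unfold Rdiv in H3. rewrite Rinv_0 in H3. lra. }
  assert (Hs : c^2 + d^2 = 1). { unfold Rdiv in H3. rewrite Rmult_1_l in H3. rewrite <- (Rinv_inv (c^2+d^2)). rewrite H3. apply Rinv_1. }
  rewrite Hs in H2. 
  assert (Hbd : b * d + a * c = 0). { rewrite <- H2. field. }
  assert (Ha : a = d).
  { assert (E : a * (c^2+d^2) = c * (a*c + b*d) + d * (a*d - b*c)) by ring.
    rewrite Hs, H1 in E. replace (a*c+b*d) with 0 in E by lra. lra. }
  assert (Hb : b = - c).
  { assert (E : b * (c^2+d^2) = - c * (a*d - b*c) + d * (a*c + b*d)) by ring.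
    rewrite Hs, H1 in E. replace (a*c+b*d) with 0 in E by lra. lra. }
  subst a b.
  set (D := (c * x + d) ^ 2 + (c * y) ^ 2).
  set (N1 := (d * x + - c) * (c * x + d) + d * c * y ^ 2).
  assert (HD : 0 < D).
  { unfold D. destruct (Req_dec c 0). subst c. replace ((0 * x + d) ^ 2 + (0 * y) ^ 2) with (0^2 + d^2) by ring. lra.
    assert (c * y <> 0) by (apply Rmult_integral_contrapositive_currified; lra).
    pose proof (Rsqr_pos_lt _ H). unfold Rsqr in H0. pose proof (pow2_ge_0 (c*x+d)). simpl. nra. }
  assert (I1 : N1^2 + y^2 = ((d*x - c)^2 + d^2*y^2) * D).
  { assert (E : N1^2 + (c^2+d^2)^2 * y^2 = ((d*x - c)^2 + d^2*y^2) * D) by (unfold N1, D; ring).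
    rewrite Hs in E. rewrite <- E. ring. }
  assert (I2 : (d*x - c)^2 + d^2*y^2 + D = x^2 + y^2 + 1).
  { assert (E : (d*x - c)^2 + d^2*y^2 + D = (c^2+d^2) * (x^2 + y^2 + 1)) by (unfold D; ring).
    rewrite Hs in E. lra. }
  assert (I3 : N1^2 + (y - D)^2 = D * (x^2 + (y-1)^2)).
  { replace (N1^2 + (y-D)^2) with ((N1^2 + y^2) - 2*y*D + D^2) by ring. rewrite I1.
    replace ((d*x - c)^2 + d^2*y^2) with (x^2 + y^2 + 1 - D) by lra. ring. }
  unfold qf. fold N1. fold D.
  replace (((N1 / D) ^ 2 + (y / D - 1) ^ 2) / (2 * (y / D))) with ((N1^2 + (y - D)^2) / (2 * y * D)) by fld.
  rewrite I3. fld.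
Qed.

Lemma key_alg : forall z P D W, 0 < W -> W * W = 1 + Hf z * P^2 ->
  Hf z * D + (z+1) * P = (1 + Hf z * P^2) * (2 - (z+1) * P) ->
  / 2 * ((D / W - P * ((2*z+2) * P^2 + 2 * Hf z * P * D) / (2 * W^3)) * Hf z + P / W * (2 * (z + 1))) = / W.
Proof.
  intros z P D W HW HW2 Hode.
  assert (E : / 2 * ((D / W - P * ((2*z+2) * P^2 + 2 * Hf z * P * D) / (2 * W^3)) * Hf z + P / W * (2 * (z + 1)))
    = (Hf z * D * (W*W) - Hf z * P * ((z+1)*P^2 + Hf z*P*D) + 2*(z+1)*P*(W*W)) / (2 * W^3)) by fld.
  rewrite E, HW2.
  assert (N : Hf z * D * (1 + Hf z * P ^ 2) - Hf z * P * ((z + 1) * P ^ 2 + Hf z * P * D) + 2 * (z + 1) * P * (1 + Hf z * P ^ 2)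
     = 2 * (1 + Hf z * P^2) + (Hf z * D + (z+1) * P - (1 + Hf z * P^2) * (2 - (z+1) * P))) by ring.
  rewrite N, Hode, <- HW2. fld.
Qed.

Definition Wq (z : R) := sqrt (1 + Hf z * Psol z ^ 2).
Definition Gq (z : R) := Psol z / Wq z.
Definition Gd (z : R) := Derive Psol z / Wq z - Psol z * ((2*z+2) * Psol z^2 + 2 * Hf z * Psol z * Derive Psol z) / (2 * Wq z ^ 3).

Lemma Wq_pos : forall z, 0 <= z -> 0 < Wq z.
Proof. intros. unfold Wq. apply sqrt_lt_R0. unfold Hf. pose proof (pow2_ge_0 (Psol z)). 
  assert (0 <= z * (z+2)) by nra. nra. Qed.

Lemma Gq_deriv : forall z, 0 <= z -> is_derive Gq z (Gd z).
Proof.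
  intros z Hz. pose proof (Wq_pos z Hz). pose proof rho_pos.
  assert (HP : ex_derive Psol z) by (apply (Psol_smooth 0); lra).
  unfold Gq, Gd, Wq, Hf in *. set (W := sqrt (1 + z * (z + 2) * Psol z ^ 2)) in *.
  assert (0 <= z*(z+2)*Psol z^2) by (apply Rmult_le_pos; [nra| apply pow2_ge_0]).
  assert (HW2 : W * W = 1 + z * (z + 2) * Psol z ^ 2) by (apply sqrt_sqrt; lra).
  assert (HP' : ex_derive (fun x => Psol x) z) by exact HP.
  auto_derive.
  - replace (Psol z * (Psol z * 1)) with (Psol z ^ 2) by ring. fold W. 
    repeat split; auto; lra.
  - replace (Psol z * (Psol z * 1)) with (Psol z ^ 2) by ring. fold W.
    change (Derive (fun x => Psol x) z) with (Derive Psol z).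
    field_simplify; try lra. 
Qed.

Definition qy (x y : R) := 1/2 + -1/2 * (x * x + 1) * (/ y * / y).

Lemma px_eq : forall a b, 0 < b -> partial_x usol a b = Psol (qf a b) * (a * / b).
Proof.
  intros a b Hb. change (partial_x usol a b) with (iter_partial (cons false nil) usol a b).
  rewrite iter_ev2 by auto. cbn [dw dX dY]. unfold fqx, fqy. cbn [ev2]. rewrite (Fsol_Dn 0). unfold qy. simpl. reflexivity.
  pose proof rho_pos. pose proof (qf_nonneg a b Hb). lra.
Qed.

Lemma py_eq : forall a b, 0 < b -> partial_y usol a b = Psol (qf a b) * qy a b.
Proof.
  intros a b Hb. change (partial_y usol a b) with (iter_partial (cons true nil) usol a b).
  rewrite iter_ev2 by auto. cbn [dw dX dY]. unfold fqx, fqy. cbn [ev2]. rewrite (Fsol_Dn 0). unfold qy. simpl. reflexivity.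
  pose proof rho_pos. pose proof (qf_nonneg a b Hb). lra.
Qed.

Lemma geom1 : forall x y, 0 < y -> y^2 * ((x * / y)^2 + (qy x y)^2) = Hf (qf x y).
Proof. intros. unfold qy, qf, Hf. fld. Qed.

Lemma Wg_eq : forall a b, 0 < b -> Wg usol a b = Wq (qf a b).
Proof.
  intros a b Hb. unfold Wg, Wq. rewrite px_eq, py_eq by auto. f_equal.
  rewrite <- geom1 by auto. ring.
Qed.

Lemma ratio_x : forall a b, 0 < b -> partial_x usol a b / Wg usol a b = Gq (qf a b) * (a * / b).
Proof. intros. rewrite px_eq, Wg_eq by auto. unfold Gq. pose proof (Wq_pos (qf a b) (qf_nonneg a b H)). fld. Qed.
Lemma ratio_y : forall a b, 0 < b -> partial_y usol a b / Wg usol a b = Gq (qf a b) * qy a b.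
Proof. intros. rewrite py_eq, Wg_eq by auto. unfold Gq. pose proof (Wq_pos (qf a b) (qf_nonneg a b H)). fld. Qed.

Lemma dx_term : forall x y, 0 < y ->
  partial_x (fun a b => partial_x usol a b / Wg usol a b) x y
  = Gd (qf x y) * (x * / y) * (x * / y) + Gq (qf x y) * / y.
Proof.
  intros x y Hy. unfold partial_x at 1. 
  rewrite (Derive_ext _ (fun t => Gq (qf t y) * (t * / y))) by (intros; apply ratio_x; auto).
  apply is_derive_unique.
  apply (is_derive_mult (fun t => Gq (qf t y)) (fun t => t * / y)).
  - replace (Gd (qf x y) * (x * / y)) with (scal (x * / y) (Gd (qf x y))) by (unfold scal; simpl; unfold mult; simpl; ring).
    apply (is_derive_comp Gq (fun t => qf t y)). apply Gq_deriv, qf_nonneg; auto.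
    pose proof (qf_dx x y Hy). simpl in H. exact H.
  - auto_derive; auto. ring.
  - intros; apply Rmult_comm.
Qed.

Definition qyy (x y : R) := (x * x + 1) * / y^3.

Lemma dy_term : forall x y, 0 < y ->
  partial_y (fun a b => partial_y usol a b / Wg usol a b) x y
  = Gd (qf x y) * qy x y * qy x y + Gq (qf x y) * qyy x y.
Proof.
  intros x y Hy. unfold partial_y at 1. 
  rewrite (Derive_ext_loc _ (fun t => Gq (qf x t) * qy x t)).
  2:{ apply (filter_imp (fun t => 0 < t)). intros; apply ratio_y; auto. apply loc_gt; auto. }
  apply is_derive_unique.
  apply (is_derive_mult (fun t => Gq (qf x t)) (fun t => qy x t)).
  - replace (Gd (qf x y) * qy x y) with (scal (qy x y) (Gd (qf x y))) by (unfold scal; simpl; unfold mult; simpl; ring).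
    apply (is_derive_comp Gq (fun t => qf x t)). apply Gq_deriv, qf_nonneg; auto.
    pose proof (qf_dy x y Hy). unfold fqy in H. simpl in H. unfold qy. 
    replace (1 / 2 + -1 / 2 * (x * x + 1) * (/ y * / y)) with (1 / 2 + -1 / 2 * (x * x + 1) * (/ y * / y)) by ring. exact H.
  - unfold qy, qyy. auto_derive. lra. field. lra.
  - intros; apply Rmult_comm.
Qed.

Lemma geom2 : forall x y, 0 < y -> y^2 * (/ y + qyy x y) = 2 * (qf x y + 1).
Proof. intros. unfold qyy, qf. fld. Qed.

Theorem theorem3p3 :
  exists u : R -> R -> R,
    smooth_on_H2 u /\
    graph_upwards u /\
    graph_is_translator u /\
    exists ox oy : R, in_H2 ox oy /\ rotationally_symmetric_about u ox oy.
Proof.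
  exists usol. split; [|split; [|split]].
  - apply usol_smooth.
  - intros x y Hy. unfold graph_angle, Wg. apply Rinv_0_lt_compat. apply sqrt_lt_R0.
    pose proof (pow2_ge_0 (partial_x usol x y)). pose proof (pow2_ge_0 (partial_y usol x y)).
    pose proof (pow2_ge_0 y). assert (0 <= y^2 * (partial_x usol x y ^ 2 + partial_y usol x y ^ 2)) by (apply Rmult_le_pos; lra). lra.
  - intros x y Hy. unfold in_H2 in Hy. unfold graph_mean_curvature, graph_angle.
    rewrite dx_term, dy_term, Wg_eq by auto.
    set (q := qf x y).
    pose proof (geom1 x y Hy) as G1. pose proof (geom2 x y Hy) as G2. fold q in G1, G2.
    replace (y ^ 2 * (Gd q * (x * / y) * (x * / y) + Gq q * / y + (Gd q * qy x y * qy x y + Gq q * qyy x y)))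
      with (Gd q * (y^2 * ((x * / y)^2 + (qy x y)^2)) + Gq q * (y ^ 2 * (/ y + qyy x y))) by ring.
    rewrite G1, G2. 
    pose proof (qf_nonneg x y Hy) as Hq. fold q in Hq.
    pose proof (Wq_pos q Hq) as HW.
    assert (HW2 : Wq q * Wq q = 1 + Hf q * Psol q ^ 2).
    { unfold Wq. apply sqrt_sqrt. unfold Hf. assert (0 <= q * (q+2)) by nra. pose proof (pow2_ge_0 (Psol q)).
      assert (0 <= q * (q + 2) * Psol q ^ 2) by (apply Rmult_le_pos; lra). lra. }
    pose proof (Psol_ode q Hq) as Hode.
    pose proof (key_alg q (Psol q) (Derive Psol q) (Wq q) HW HW2 Hode) as K.
    unfold Gd, Gq. exact K.
  - exists 0, 1. split. unfold in_H2; lra.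
    intros a b c d Hr x y Hy. unfold usol. rewrite rot_q; auto.
Qed.
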